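(* Regarding the categories below as 1-categories: the full subcategory $\mathbf{SGr}$ of small symmetric 2-groups is coreflective in the category $\mathbf{SMC}$ of small symmetric monoidal categories and symmetric strong monoidal functors, with right adjoint to the inclusion sending each $\mathcal M$ to its Picard 2-group $\mathrm{Pic}(\mathcal M)$; and the full subcategory $\mathbf{SPu}$ of small symmetric purely monoidal categories is reflective in $\mathbf{SMC}$, with left adjoint to the inclusion sending each $\mathcal M$ to $P(\mathcal M)$.
   Context: An object $A$ of a monoidal category $(\mathcal M,\otimes,I,a,\ell,r)$ is weakly invertible if there is $B$ with $A\otimes B\cong B\otimes A\cong I$. A (symmetric) 2-group is a (symmetric) monoidal groupoid in which every object is weakly invertible. $\mathrm{Pic}(\mathcal M)$ is the subcategory of weakly invertible objects and isomorphisms between them, with inherited structure. A monoidal category is purely monoidal if between any two weakly invertible objects there is exactly one isomorphism. For symmetric monoidal $\mathcal M$ (symmetry $b$), $P(\mathcal M)$ is the symmetric monoidal category with the same objects as $\mathcal M$; morphisms $X\to Y$ are classes $[A,f]$ of pairs with $A$ weakly invertible and $f\colon X\to Y\otimes A$, where $(A,f)\sim(A',f')$ iff some isomorphism $\alpha\colon A\to A'$ satisfies $(Y\otimes\alpha)f=f'$; composition $[B,g]\circ[A,f]=[B\otimes A,\ a_{Z,B,A}(g\otimes A)f]$; identities $[I,r_X^{-1}]$; tensor of objects as in $\mathcal M$; $[A,f]\otimes[A',f']=[A\otimes A',g]$ where $g$ is $f\otimes f'$ followed by the canonical reassociation and the symmetry $b_{A,Y'}$ giving $(Y\otimes A)\otimes(Y'\otimes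 A')\to(Y\otimes Y')\otimes(A\otimes A')$; associator, unitors and symmetry are the images of those of $\mathcal M$ under the functor $\pi_{\mathcal M}\colon\mathcal M\to P(\mathcal M)$, $X\mapsto X$, $f\mapsto[I,r_Y^{-1}f]$. *)

(* Defs.v *)
From Stdlib Require Import ClassicalEpsilon.

(* The inverses of the
   associator and unitors are included as data (they are unique, so this
   is harmless); the symmetry is its own inverse (axiom ax_sym_inv). *)
Record smc_data : Type := {
  mob : Type;
  mhom : mob -> mob -> Type;
  mcomp : forall X Y Z : mob, mhom Y Z -> mhom X Y -> mhom X Z;
  mid : forall X : mob, mhom X X;
  mtens : mob -> mob -> mob;
  mtensm : forall X X' Y Y' : mob, mhom X X' -> mhom Y Y' ->
           mhom (mtens X Y) (mtens X' Y');
  munit : mob;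
  massoc : forall X Y Z, mhom (mtens (mtens X Y) Z) (mtens X (mtens Y Z));
  massoc_inv : forall X Y Z, mhom (mtens X (mtens Y Z)) (mtens (mtens X Y) Z);
  mlunit : forall X, mhom (mtens munit X) X;
  mlunit_inv : forall X, mhom X (mtens munit X);
  mrunit : forall X, mhom (mtens X munit) X;
  mrunit_inv : forall X, mhom X (mtens X munit);
  msym : forall X Y, mhom (mtens X Y) (mtens Y X) }.

Arguments mhom {s} _ _.
Arguments mcomp {s X Y Z} _ _.
Arguments mid {s} _.
Arguments mtens {s} _ _.
Arguments mtensm {s X X' Y Y'} _ _.
Arguments munit {s}.
Arguments massoc {s} _ _ _.
Arguments massoc_inv {s} _ _ _.
Arguments mlunit {s} _.
Arguments mlunit_inv {s} _.
Arguments mrunit {s} _.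
Arguments mrunit_inv {s} _.
Arguments msym {s} _ _.

Record smc_axioms (M : smc_data) : Prop := {
  ax_comp_assoc : forall (W X Y Z : mob M) (h : mhom Y Z) (g : mhom X Y)
      (f : mhom W X), mcomp h (mcomp g f) = mcomp (mcomp h g) f;
  ax_id_l : forall (X Y : mob M) (f : mhom X Y), mcomp (mid Y) f = f;
  ax_id_r : forall (X Y : mob M) (f : mhom X Y), mcomp f (mid X) = f;
  ax_tens_id : forall X Y : mob M, mtensm (mid X) (mid Y) = mid (mtens X Y);
  ax_tens_comp : forall (X X' X'' Y Y' Y'' : mob M) (f : mhom X X')
      (f' : mhom X' X'') (g : mhom Y Y') (g' : mhom Y' Y''),
      mtensm (mcomp f' f) (mcomp g' g) = mcomp (mtensm f' g') (mtensm f g);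
  ax_assoc_nat : forall (X X' Y Y' Z Z' : mob M) (f : mhom X X')
      (g : mhom Y Y') (h : mhom Z Z'),
      mcomp (massoc X' Y' Z') (mtensm (mtensm f g) h)
      = mcomp (mtensm f (mtensm g h)) (massoc X Y Z);
  ax_lunit_nat : forall (X Y : mob M) (f : mhom X Y),
      mcomp (mlunit Y) (mtensm (mid munit) f) = mcomp f (mlunit X);
  ax_runit_nat : forall (X Y : mob M) (f : mhom X Y),
      mcomp (mrunit Y) (mtensm f (mid munit)) = mcomp f (mrunit X);
  ax_sym_nat : forall (X X' Y Y' : mob M) (f : mhom X X') (g : mhom Y Y'),
      mcomp (msym X' Y') (mtensm f g) = mcomp (mtensm g f) (msym X Y);
  ax_assoc_inv1 : forall X Y Z : mob M,
      mcomp (massoc_inv X Y Z) (massoc X Y Z) = mid _;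
  ax_assoc_inv2 : forall X Y Z : mob M,
      mcomp (massoc X Y Z) (massoc_inv X Y Z) = mid _;
  ax_lunit_inv1 : forall X : mob M, mcomp (mlunit_inv X) (mlunit X) = mid _;
  ax_lunit_inv2 : forall X : mob M, mcomp (mlunit X) (mlunit_inv X) = mid _;
  ax_runit_inv1 : forall X : mob M, mcomp (mrunit_inv X) (mrunit X) = mid _;
  ax_runit_inv2 : forall X : mob M, mcomp (mrunit X) (mrunit_inv X) = mid _;
  ax_sym_inv : forall X Y : mob M, mcomp (msym Y X) (msym X Y) = mid _;
  ax_triangle : forall X Y : mob M,
      mcomp (mtensm (mid X) (mlunit Y)) (massoc X munit Y)
      = mtensm (mrunit X) (mid Y);
  ax_pentagon : forall W X Y Z : mob M,
      mcomp (mtensm (mid W) (massoc X Y Z))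
        (mcomp (massoc W (mtens X Y) Z) (mtensm (massoc W X Y) (mid Z)))
      = mcomp (massoc W X (mtens Y Z)) (massoc (mtens W X) Y Z);
  ax_hexagon : forall X Y Z : mob M,
      mcomp (massoc Y Z X) (mcomp (msym X (mtens Y Z)) (massoc X Y Z))
      = mcomp (mtensm (mid Y) (msym X Z))
          (mcomp (massoc Y X Z) (mtensm (msym X Y) (mid Z))) }.

Record SMC : Type := { smc :> smc_data; smc_ax : smc_axioms smc }.

Definition is_iso (M : smc_data) {X Y : mob M} (f : mhom X Y) : Prop :=
  exists g : mhom Y X, mcomp g f = mid X /\ mcomp f g = mid Y.

Definition isomorphic (M : smc_data) (X Y : mob M) : Prop :=
  exists f : mhom X Y, is_iso M f.

Definition weakly_invertible (M : smc_data) (A : mob M) : Prop :=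
  exists B : mob M, isomorphic M (mtens A B) munit /\
                    isomorphic M (mtens B A) munit.

Definition is_groupoid (M : smc_data) : Prop :=
  forall (X Y : mob M) (f : mhom X Y), is_iso M f.

Definition is_sym_2group (M : smc_data) : Prop :=
  smc_axioms M /\ is_groupoid M /\ forall X : mob M, weakly_invertible M X.

Definition purely_monoidal (M : smc_data) : Prop :=
  forall A B : mob M, weakly_invertible M A -> weakly_invertible M B ->
    exists f : mhom A B, is_iso M f /\
      forall g : mhom A B, is_iso M g -> g = f.

Record fdata (M N : smc_data) : Type := {
  fo : mob M -> mob N;
  fm : forall X Y : mob M, mhom X Y -> mhom (fo X) (fo Y);
  fphi2 : forall X Y : mob M, mhom (mtens (fo X) (fo Y)) (fo (mtens X Y));
  fphi0 : mhom (s := N) munit (fo munit) }.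

Arguments fo {M N} _ _.
Arguments fm {M N} _ {X Y} _.
Arguments fphi2 {M N} _ _ _.
Arguments fphi0 {M N} _.

Record is_ssmf (M N : smc_data) (F : fdata M N) : Prop := {
  f_comp : forall (X Y Z : mob M) (g : mhom Y Z) (f : mhom X Y),
      fm F (mcomp g f) = mcomp (fm F g) (fm F f);
  f_id : forall X : mob M, fm F (mid X) = mid (fo F X);
  f_phi2_nat : forall (X X' Y Y' : mob M) (f : mhom X X') (g : mhom Y Y'),
      mcomp (fm F (mtensm f g)) (fphi2 F X Y)
      = mcomp (fphi2 F X' Y') (mtensm (fm F f) (fm F g));
  f_phi2_iso : forall X Y : mob M, is_iso N (fphi2 F X Y);
  f_phi0_iso : is_iso N (fphi0 F);
  f_assoc : forall X Y Z : mob M,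
      mcomp (fm F (massoc X Y Z))
        (mcomp (fphi2 F (mtens X Y) Z) (mtensm (fphi2 F X Y) (mid (fo F Z))))
      = mcomp (fphi2 F X (mtens Y Z))
          (mcomp (mtensm (mid (fo F X)) (fphi2 F Y Z))
             (massoc (fo F X) (fo F Y) (fo F Z)));
  f_lunit : forall X : mob M,
      mcomp (fm F (mlunit X))
        (mcomp (fphi2 F munit X) (mtensm (fphi0 F) (mid (fo F X))))
      = mlunit (fo F X);
  f_runit : forall X : mob M,
      mcomp (fm F (mrunit X))
        (mcomp (fphi2 F X munit) (mtensm (mid (fo F X)) (fphi0 F)))
      = mrunit (fo F X);
  f_sym : forall X Y : mob M,
      mcomp (fm F (msym X Y)) (fphi2 F X Y)
      = mcomp (fphi2 F Y X) (msym (fo F X) (fo F Y)) }.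

Definition fcomp {L M N : smc_data} (G : fdata M N) (F : fdata L M)
  : fdata L N :=
  {| fo := fun X => fo G (fo F X);
     fm := fun X Y f => fm G (fm F f);
     fphi2 := fun X Y => mcomp (fm G (fphi2 F X Y)) (fphi2 G (fo F X) (fo F Y));
     fphi0 := mcomp (fm G (fphi0 F)) (fphi0 G) |}.

Section Facts.
Variable M : SMC.
Let Ax := smc_ax M.

Lemma iso_id (X : mob M) : is_iso M (mid X).
Proof. exists (mid X); split; apply (ax_id_l _ Ax). Qed.

Lemma iso_comp (X Y Z : mob M) (g : mhom Y Z) (f : mhom X Y) :
  is_iso M f -> is_iso M g -> is_iso M (mcomp g f).
Proof.
  intros [f' [Hf1 Hf2]] [g' [Hg1 Hg2]]; exists (mcomp f' g'); split.
  - rewrite (ax_comp_assoc _ Ax), <- (ax_comp_assoc _ Ax _ _ _ _ f'), Hg1,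
      (ax_id_r _ Ax); exact Hf1.
  - rewrite (ax_comp_assoc _ Ax), <- (ax_comp_assoc _ Ax _ _ _ _ g), Hf2,
      (ax_id_r _ Ax); exact Hg2.
Qed.

Lemma iso_tensm (X X' Y Y' : mob M) (f : mhom X X') (g : mhom Y Y') :
  is_iso M f -> is_iso M g -> is_iso M (mtensm f g).
Proof.
  intros [f' [Hf1 Hf2]] [g' [Hg1 Hg2]]; exists (mtensm f' g'); split;
    rewrite <- (ax_tens_comp _ Ax); [rewrite Hf1, Hg1 | rewrite Hf2, Hg2];
    apply (ax_tens_id _ Ax).
Qed.

Lemma iso_assoc (X Y Z : mob M) : is_iso M (massoc X Y Z).
Proof. exists (massoc_inv X Y Z); split; [apply ax_assoc_inv1 | apply ax_assoc_inv2]; exact Ax. Qed.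
Lemma iso_assoc_inv (X Y Z : mob M) : is_iso M (massoc_inv X Y Z).
Proof. exists (massoc X Y Z); split; [apply ax_assoc_inv2 | apply ax_assoc_inv1]; exact Ax. Qed.
Lemma iso_lunit (X : mob M) : is_iso M (mlunit X).
Proof. exists (mlunit_inv X); split; [apply ax_lunit_inv1 | apply ax_lunit_inv2]; exact Ax. Qed.
Lemma iso_lunit_inv (X : mob M) : is_iso M (mlunit_inv X).
Proof. exists (mlunit X); split; [apply ax_lunit_inv2 | apply ax_lunit_inv1]; exact Ax. Qed.
Lemma iso_runit (X : mob M) : is_iso M (mrunit X).
Proof. exists (mrunit_inv X); split; [apply ax_runit_inv1 | apply ax_runit_inv2]; exact Ax. Qed.
Lemma iso_runit_inv (X : mob M) : is_iso M (mrunit_inv X).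
Proof. exists (mrunit X); split; [apply ax_runit_inv2 | apply ax_runit_inv1]; exact Ax. Qed.
Lemma iso_sym (X Y : mob M) : is_iso M (msym X Y).
Proof. exists (msym Y X); split; apply (ax_sym_inv _ Ax). Qed.

Lemma isomorphic_trans (X Y Z : mob M) :
  isomorphic M X Y -> isomorphic M Y Z -> isomorphic M X Z.
Proof. intros [f Hf] [g Hg]; exists (mcomp g f); apply iso_comp; auto. Qed.

Lemma isomorphic_tens (X X' Y Y' : mob M) :
  isomorphic M X X' -> isomorphic M Y Y' ->
  isomorphic M (mtens X Y) (mtens X' Y').
Proof. intros [f Hf] [g Hg]; exists (mtensm f g); apply iso_tensm; auto. Qed.

Lemma isomorphic_refl (X : mob M) : isomorphic M X X.
Proof. exists (mid X); apply iso_id. Qed.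

Lemma wi_unit : weakly_invertible M munit.
Proof.
  exists munit; split; exists (mlunit munit); apply iso_lunit.
Qed.

Lemma wi_tens (A C : mob M) :
  weakly_invertible M A -> weakly_invertible M C ->
  weakly_invertible M (mtens A C).
Proof.
  intros [A' [HA1 HA2]] [C' [HC1 HC2]]; exists (mtens C' A'); split.
  - eapply isomorphic_trans. { exists (massoc A C (mtens C' A')); apply iso_assoc. }
    eapply isomorphic_trans.
    { apply isomorphic_tens; [apply isomorphic_refl|].
      exists (massoc_inv C C' A'); apply iso_assoc_inv. }
    eapply isomorphic_trans.
    { apply isomorphic_tens; [apply isomorphic_refl|].
      apply isomorphic_tens; [exact HC1 | apply isomorphic_refl]. }
    eapply isomorphic_trans.
    { apply isomorphic_tens; [apply isomorphic_refl|].
      exists (mlunit A'); apply iso_lunit. }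
    exact HA1.
  - eapply isomorphic_trans. { exists (massoc C' A' (mtens A C)); apply iso_assoc. }
    eapply isomorphic_trans.
    { apply isomorphic_tens; [apply isomorphic_refl|].
      exists (massoc_inv A' A C); apply iso_assoc_inv. }
    eapply isomorphic_trans.
    { apply isomorphic_tens; [apply isomorphic_refl|].
      apply isomorphic_tens; [exact HA2 | apply isomorphic_refl]. }
    eapply isomorphic_trans.
    { apply isomorphic_tens; [apply isomorphic_refl|].
      exists (mlunit C); apply iso_lunit. }
    exact HC2.
Qed.

End Facts.

Section Pic.
Variable M : SMC.

Definition pic_ob : Type := {X : mob M | weakly_invertible M X}.
Definition pic_hom (A B : pic_ob) : Type :=
  {f : mhom (proj1_sig A) (proj1_sig B) | is_iso M f}.

Definition pic_tens (A B : pic_ob) : pic_ob :=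
  exist _ (mtens (proj1_sig A) (proj1_sig B))
    (wi_tens M _ _ (proj2_sig A) (proj2_sig B)).
Definition pic_unit : pic_ob := exist _ munit (wi_unit M).

Definition Pic_data : smc_data :=
  {| mob := pic_ob;
     mhom := pic_hom;
     mcomp := fun X Y Z g f =>
       exist _ (mcomp (proj1_sig g) (proj1_sig f))
         (iso_comp M _ _ _ _ _ (proj2_sig f) (proj2_sig g));
     mid := fun X => exist _ (mid (proj1_sig X)) (iso_id M _);
     mtens := pic_tens;
     mtensm := fun X X' Y Y' f g =>
       exist _ (mtensm (proj1_sig f) (proj1_sig g))
         (iso_tensm M _ _ _ _ _ _ (proj2_sig f) (proj2_sig g));
     munit := pic_unit;
     massoc := fun X Y Z => exist _ (massoc (proj1_sig X) (proj1_sig Y) (proj1_sig Z))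
                              (iso_assoc M _ _ _);
     massoc_inv := fun X Y Z =>
       exist _ (massoc_inv (proj1_sig X) (proj1_sig Y) (proj1_sig Z))
         (iso_assoc_inv M _ _ _);
     mlunit := fun X => exist _ (mlunit (proj1_sig X)) (iso_lunit M _);
     mlunit_inv := fun X => exist _ (mlunit_inv (proj1_sig X)) (iso_lunit_inv M _);
     mrunit := fun X => exist _ (mrunit (proj1_sig X)) (iso_runit M _);
     mrunit_inv := fun X => exist _ (mrunit_inv (proj1_sig X)) (iso_runit_inv M _);
     msym := fun X Y => exist _ (msym (proj1_sig X) (proj1_sig Y)) (iso_sym M _ _) |}.

Definition pic_incl : fdata Pic_data M :=
  {| fo := fun A : mob Pic_data => proj1_sig A;
     fm := fun (A B : mob Pic_data) (f : mhom A B) => proj1_sig f;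
     fphi2 := fun (A B : mob Pic_data) => mid (mtens (proj1_sig A) (proj1_sig B));
     fphi0 := mid munit |}.

End Pic.

Section P.
Variable M : SMC.

Definition wob : Type := {A : mob M | weakly_invertible M A}.
Definition wunit : wob := exist _ munit (wi_unit M).
Definition wtens (B A : wob) : wob :=
  exist _ (mtens (proj1_sig B) (proj1_sig A))
    (wi_tens M _ _ (proj2_sig B) (proj2_sig A)).

Definition prep (X Y : mob M) : Type :=
  {A : wob & mhom X (mtens Y (proj1_sig A))}.

Definition prel {X Y : mob M} (r s : prep X Y) : Prop :=
  exists alpha : mhom (proj1_sig (projT1 r)) (proj1_sig (projT1 s)),
    is_iso M alpha /\ mcomp (mtensm (mid Y) alpha) (projT2 r) = projT2 s.

Definition pcls {X Y : mob M} (r : prep X Y) : prep X Y -> Prop :=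
  fun s => prel r s.

(* morphisms of P(M): classes [A,f] *)
Definition phom (X Y : mob M) : Type :=
  {S : prep X Y -> Prop | exists r : prep X Y, S = pcls r}.

Definition pmk {X Y : mob M} (r : prep X Y) : phom X Y :=
  exist _ (pcls r) (ex_intro _ r eq_refl).

Definition prep_of {X Y : mob M} (S : phom X Y) : prep X Y :=
  proj1_sig (constructive_indefinite_description _ (proj2_sig S)).

Definition rcomp {X Y Z : mob M} (r : prep Y Z) (s : prep X Y) : prep X Z :=
  existT _ (wtens (projT1 r) (projT1 s))
    (mcomp (massoc Z (proj1_sig (projT1 r)) (proj1_sig (projT1 s)))
       (mcomp (mtensm (projT2 r) (mid (proj1_sig (projT1 s)))) (projT2 s))).

Definition pcomp {X Y Z : mob M} (g : phom Y Z) (f : phom X Y) : phom X Z :=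
  pmk (rcomp (prep_of g) (prep_of f)).

Definition pid (X : mob M) : phom X X :=
  pmk (existT (fun A : wob => mhom X (mtens X (proj1_sig A))) wunit (mrunit_inv X)).

Definition canon (Y A Y' A' : mob M)
  : mhom (mtens (mtens Y A) (mtens Y' A')) (mtens (mtens Y Y') (mtens A A')) :=
  mcomp (massoc_inv Y Y' (mtens A A'))
   (mcomp (mtensm (mid Y) (massoc Y' A A'))
    (mcomp (mtensm (mid Y) (mtensm (msym A Y') (mid A')))
     (mcomp (mtensm (mid Y) (massoc_inv A Y' A'))
        (massoc Y A (mtens Y' A'))))).

Definition rtens {X Y X' Y' : mob M} (r : prep X Y) (s : prep X' Y')
  : prep (mtens X X') (mtens Y Y') :=
  existT _ (wtens (projT1 r) (projT1 s))
    (mcomp (canon Y (proj1_sig (projT1 r)) Y' (proj1_sig (projT1 s)))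
       (mtensm (projT2 r) (projT2 s))).

Definition ptensm {X X' Y Y' : mob M} (f : phom X X') (g : phom Y Y')
  : phom (mtens X Y) (mtens X' Y') :=
  pmk (rtens (prep_of f) (prep_of g)).

Definition pi_m {X Y : mob M} (f : mhom X Y) : phom X Y :=
  pmk (existT (fun A : wob => mhom X (mtens Y (proj1_sig A))) wunit
         (mcomp (mrunit_inv Y) f)).

Definition P_data : smc_data :=
  {| mob := mob M;
     mhom := phom;
     mcomp := fun X Y Z g f => pcomp g f;
     mid := pid;
     mtens := fun X Y => mtens X Y;
     mtensm := fun X X' Y Y' f g => ptensm f g;
     munit := munit;
     massoc := fun X Y Z => pi_m (massoc X Y Z);
     massoc_inv := fun X Y Z => pi_m (massoc_inv X Y Z);
     mlunit := fun X => pi_m (mlunit X);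
     mlunit_inv := fun X => pi_m (mlunit_inv X);
     mrunit := fun X => pi_m (mrunit X);
     mrunit_inv := fun X => pi_m (mrunit_inv X);
     msym := fun X Y => pi_m (msym X Y) |}.

Definition pi_functor : fdata M P_data :=
  @Build_fdata M P_data (fun X : mob M => X)
     (fun (X Y : mob M) (f : mhom (s := M) X Y) => pi_m f)
     (fun X Y => pid (mtens X Y))
     (pid munit).

End P.

(* Main.v *)
Require Import Defs.
From Stdlib Require Import ProofIrrelevance FunctionalExtensionality PropExtensionality ClassicalEpsilon.

Notation "g ∘ f" := (mcomp g f) (at level 40, left associativity).
Notation "f ⊗ g" := (mtensm f g) (at level 30).

Section Tk.
Context {M : SMC}.
Let Ax := smc_ax M.
Local Notation "1" := (mid _).

Lemma cA {W X Y Z : mob M} (h : mhom Y Z) (g : mhom X Y) (f : mhom W X) :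
  h ∘ (g ∘ f) = (h ∘ g) ∘ f.
Proof. apply (ax_comp_assoc _ Ax). Qed.
Lemma idl {X Y : mob M} (f : mhom X Y) : 1 ∘ f = f.
Proof. apply (ax_id_l _ Ax). Qed.
Lemma idr {X Y : mob M} (f : mhom X Y) : f ∘ 1 = f.
Proof. apply (ax_id_r _ Ax). Qed.
Lemma tid (X Y : mob M) : (mid X) ⊗ (mid Y) = mid (mtens X Y).
Proof. apply (ax_tens_id _ Ax). Qed.
Lemma tcomp {X X' X'' Y Y' Y'' : mob M} (f : mhom X X') (f' : mhom X' X'')
  (g : mhom Y Y') (g' : mhom Y' Y'') : (f' ∘ f) ⊗ (g' ∘ g) = (f' ⊗ g') ∘ (f ⊗ g).
Proof. apply (ax_tens_comp _ Ax). Qed.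

Lemma nat_a {X X' Y Y' Z Z' : mob M} (f : mhom X X') (g : mhom Y Y') (h : mhom Z Z') :
  massoc X' Y' Z' ∘ ((f ⊗ g) ⊗ h) = (f ⊗ (g ⊗ h)) ∘ massoc X Y Z.
Proof. apply (ax_assoc_nat _ Ax). Qed.
Lemma aai (X Y Z : mob M) : massoc X Y Z ∘ massoc_inv X Y Z = 1.
Proof. apply (ax_assoc_inv2 _ Ax). Qed.
Lemma aia (X Y Z : mob M) : massoc_inv X Y Z ∘ massoc X Y Z = 1.
Proof. apply (ax_assoc_inv1 _ Ax). Qed.
Lemma lli (X : mob M) : mlunit X ∘ mlunit_inv X = 1.
Proof. apply (ax_lunit_inv2 _ Ax). Qed.
Lemma lil (X : mob M) : mlunit_inv X ∘ mlunit X = 1.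
Proof. apply (ax_lunit_inv1 _ Ax). Qed.
Lemma rri (X : mob M) : mrunit X ∘ mrunit_inv X = 1.
Proof. apply (ax_runit_inv2 _ Ax). Qed.
Lemma rir (X : mob M) : mrunit_inv X ∘ mrunit X = 1.
Proof. apply (ax_runit_inv1 _ Ax). Qed.
Lemma bb (X Y : mob M) : msym Y X ∘ msym X Y = 1.
Proof. apply (ax_sym_inv _ Ax). Qed.

Lemma nat_ai {X X' Y Y' Z Z' : mob M} (f : mhom X X') (g : mhom Y Y') (h : mhom Z Z') :
  massoc_inv X' Y' Z' ∘ (f ⊗ (g ⊗ h)) = ((f ⊗ g) ⊗ h) ∘ massoc_inv X Y Z.
Proof.
  rewrite <- (idr (_ ∘ (f ⊗ (g ⊗ h)))), <- (aai X Y Z), !cA, <- (cA _ _ (massoc X Y Z)),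
    <- nat_a, !cA, aia, idl; reflexivity.
Qed.
Lemma nat_l {X Y : mob M} (f : mhom X Y) : mlunit Y ∘ (1 ⊗ f) = f ∘ mlunit X.
Proof. apply (ax_lunit_nat _ Ax). Qed.
Lemma nat_r {X Y : mob M} (f : mhom X Y) : mrunit Y ∘ (f ⊗ 1) = f ∘ mrunit X.
Proof. apply (ax_runit_nat _ Ax). Qed.
Lemma nat_li {X Y : mob M} (f : mhom X Y) : mlunit_inv Y ∘ f = (1 ⊗ f) ∘ mlunit_inv X.
Proof.
  rewrite <- (idr (_ ∘ f)), <- (lli X), !cA, <- (cA _ _ (mlunit X)), <- nat_l, !cA, lil, idl;
  reflexivity.
Qed.
Lemma nat_ri {X Y : mob M} (f : mhom X Y) : mrunit_inv Y ∘ f = (f ⊗ 1) ∘ mrunit_inv X.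
Proof.
  rewrite <- (idr (_ ∘ f)), <- (rri X), !cA, <- (cA _ _ (mrunit X)), <- nat_r, !cA, rir, idl;
  reflexivity.
Qed.
Lemma nat_b {X X' Y Y' : mob M} (f : mhom X X') (g : mhom Y Y') :
  msym X' Y' ∘ (f ⊗ g) = (g ⊗ f) ∘ msym X Y.
Proof. apply (ax_sym_nat _ Ax). Qed.

Lemma triangle (X Y : mob M) : (mid X ⊗ mlunit Y) ∘ massoc X munit Y = mrunit X ⊗ mid Y.
Proof. apply (ax_triangle _ Ax). Qed.
Lemma pentagon (W X Y Z : mob M) :
  (mid W ⊗ massoc X Y Z) ∘ (massoc W (mtens X Y) Z ∘ (massoc W X Y ⊗ mid Z))
  = massoc W X (mtens Y Z) ∘ massoc (mtens W X) Y Z.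
Proof. apply (ax_pentagon _ Ax). Qed.
Lemma hexagon (X Y Z : mob M) :
  massoc Y Z X ∘ (msym X (mtens Y Z) ∘ massoc X Y Z)
  = (mid Y ⊗ msym X Z) ∘ (massoc Y X Z ∘ (msym X Y ⊗ mid Z)).
Proof. apply (ax_hexagon _ Ax). Qed.

Lemma tsl {X X' Y Y' : mob M} (f : mhom X X') (g : mhom Y Y') :
  f ⊗ g = (f ⊗ mid Y') ∘ (mid X ⊗ g).
Proof. rewrite <- tcomp, idl, idr; reflexivity. Qed.
Lemma tsr {X X' Y Y' : mob M} (f : mhom X X') (g : mhom Y Y') :
  f ⊗ g = (mid X' ⊗ g) ∘ (f ⊗ mid Y).
Proof. rewrite <- tcomp, idl, idr; reflexivity. Qed.
Lemma t1c {X Y Y' Y'' : mob M} (g : mhom Y Y') (g' : mhom Y' Y'') :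
  (mid X ⊗ g') ∘ (mid X ⊗ g) = mid X ⊗ (g' ∘ g).
Proof. rewrite <- tcomp, idl; reflexivity. Qed.
Lemma tc1 {X X' X'' Y : mob M} (f : mhom X X') (f' : mhom X' X'') :
  (f' ⊗ mid Y) ∘ (f ⊗ mid Y) = (f' ∘ f) ⊗ mid Y.
Proof. rewrite <- tcomp, idl; reflexivity. Qed.
Lemma whisk_comm {X X' Y Y' : mob M} (f : mhom X X') (g : mhom Y Y') :
  (f ⊗ mid Y') ∘ (mid X ⊗ g) = (mid X' ⊗ g) ∘ (f ⊗ mid Y).
Proof. rewrite <- tsl, <- tsr; reflexivity. Qed.

Lemma iso_cancel_l {X Y Z : mob M} (e : mhom Y Z) (f g : mhom X Y) :
  is_iso M e -> e ∘ f = e ∘ g -> f = g.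
Proof.
  intros [e' [H1 H2]] H. rewrite <- (idl f), <- (idl g), <- H1, <- !cA, H; reflexivity.
Qed.
Lemma iso_cancel_r {X Y Z : mob M} (e : mhom X Y) (f g : mhom Y Z) :
  is_iso M e -> f ∘ e = g ∘ e -> f = g.
Proof.
  intros [e' [H1 H2]] H. rewrite <- (idr f), <- (idr g), <- H2, !cA, H; reflexivity.
Qed.

Lemma faith_r {X Y : mob M} (f g : mhom X Y) : f ⊗ mid munit = g ⊗ mid munit -> f = g.
Proof.
  intros H. apply (iso_cancel_r (mrunit X)). apply iso_runit.
  rewrite <- !nat_r, H; reflexivity.
Qed.
Lemma faith_l {X Y : mob M} (f g : mhom X Y) : mid munit ⊗ f = mid munit ⊗ g -> f = g.
Proof.
  intros H. apply (iso_cancel_r (mlunit X)). apply iso_lunit.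
  rewrite <- !nat_l, H; reflexivity.
Qed.

End Tk.

Section K.
Context {M : SMC}.
Local Notation "1" := (mid _).
Lemma nat_a_k {W X X' Y Y' Z Z' : mob M} (f : mhom X X') (g : mhom Y Y') (h : mhom Z Z')
  (k : mhom W _) :
  massoc X' Y' Z' ∘ ((f ⊗ g) ⊗ h ∘ k) = (f ⊗ (g ⊗ h)) ∘ (massoc X Y Z ∘ k).
Proof. rewrite !cA, nat_a; reflexivity. Qed.
Lemma nat_ai_k {W X X' Y Y' Z Z' : mob M} (f : mhom X X') (g : mhom Y Y') (h : mhom Z Z')
  (k : mhom W _) :
  massoc_inv X' Y' Z' ∘ (f ⊗ (g ⊗ h) ∘ k) = ((f ⊗ g) ⊗ h) ∘ (massoc_inv X Y Z ∘ k).
Proof. rewrite !cA, nat_ai; reflexivity. Qed.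
Lemma nat_l_k {W X Y : mob M} (f : mhom X Y) (k : mhom W _) :
  mlunit Y ∘ ((1 ⊗ f) ∘ k) = f ∘ (mlunit X ∘ k).
Proof. rewrite !cA, nat_l; reflexivity. Qed.
Lemma nat_li_k {W X Y : mob M} (f : mhom X Y) (k : mhom W _) :
  mlunit_inv Y ∘ (f ∘ k) = (1 ⊗ f) ∘ (mlunit_inv X ∘ k).
Proof. rewrite !cA, nat_li; reflexivity. Qed.
Lemma nat_r_k {W X Y : mob M} (f : mhom X Y) (k : mhom W _) :
  mrunit Y ∘ ((f ⊗ 1) ∘ k) = f ∘ (mrunit X ∘ k).
Proof. rewrite !cA, nat_r; reflexivity. Qed.
Lemma nat_ri_k {W X Y : mob M} (f : mhom X Y) (k : mhom W _) :
  mrunit_inv Y ∘ (f ∘ k) = (f ⊗ 1) ∘ (mrunit_inv X ∘ k).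
Proof. rewrite !cA, nat_ri; reflexivity. Qed.
Lemma nat_b_k {W X X' Y Y' : mob M} (f : mhom X X') (g : mhom Y Y') (k : mhom W _) :
  msym X' Y' ∘ ((f ⊗ g) ∘ k) = (g ⊗ f) ∘ (msym X Y ∘ k).
Proof. rewrite !cA, nat_b; reflexivity. Qed.
Lemma aai_k {W X Y Z : mob M} (k : mhom W _) : massoc X Y Z ∘ (massoc_inv X Y Z ∘ k) = k.
Proof. rewrite cA, aai, idl; reflexivity. Qed.
Lemma aia_k {W X Y Z : mob M} (k : mhom W _) : massoc_inv X Y Z ∘ (massoc X Y Z ∘ k) = k.
Proof. rewrite cA, aia, idl; reflexivity. Qed.
Lemma lli_k {W X : mob M} (k : mhom W _) : mlunit X ∘ (mlunit_inv X ∘ k) = k.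
Proof. rewrite cA, lli, idl; reflexivity. Qed.
Lemma lil_k {W X : mob M} (k : mhom W _) : mlunit_inv X ∘ (mlunit X ∘ k) = k.
Proof. rewrite cA, lil, idl; reflexivity. Qed.
Lemma rri_k {W X : mob M} (k : mhom W _) : mrunit X ∘ (mrunit_inv X ∘ k) = k.
Proof. rewrite cA, rri, idl; reflexivity. Qed.
Lemma rir_k {W X : mob M} (k : mhom W _) : mrunit_inv X ∘ (mrunit X ∘ k) = k.
Proof. rewrite cA, rir, idl; reflexivity. Qed.
Lemma bb_k {W X Y : mob M} (k : mhom W _) : msym Y X ∘ (msym X Y ∘ k) = k.
Proof. rewrite cA, bb, idl; reflexivity. Qed.
Lemma t1c_k {W X Y Y' Y'' : mob M} (g : mhom Y Y') (g' : mhom Y' Y'') (k : mhom W _) :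
  (mid X ⊗ g') ∘ ((mid X ⊗ g) ∘ k) = (mid X ⊗ (g' ∘ g)) ∘ k.
Proof. rewrite cA, t1c; reflexivity. Qed.
Lemma tc1_k {W X X' X'' Y : mob M} (f : mhom X X') (f' : mhom X' X'') (k : mhom W _) :
  (f' ⊗ mid Y) ∘ ((f ⊗ mid Y) ∘ k) = ((f' ∘ f) ⊗ mid Y) ∘ k.
Proof. rewrite cA, tc1; reflexivity. Qed.
Lemma whisk_comm_k {W X X' Y Y' : mob M} (f : mhom X X') (g : mhom Y Y') (k : mhom W _) :
  (f ⊗ mid Y') ∘ ((mid X ⊗ g) ∘ k) = (mid X' ⊗ g) ∘ ((f ⊗ mid Y) ∘ k).
Proof. rewrite !cA, whisk_comm; reflexivity. Qed.
Lemma w_aai {X Y Z V : mob M} : (mid V ⊗ massoc X Y Z) ∘ (mid V ⊗ massoc_inv X Y Z) = 1.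
Proof. rewrite t1c, aai, tid; reflexivity. Qed.
Lemma w_aia {X Y Z V : mob M} : (mid V ⊗ massoc_inv X Y Z) ∘ (mid V ⊗ massoc X Y Z) = 1.
Proof. rewrite t1c, aia, tid; reflexivity. Qed.
Lemma aai_w {X Y Z V : mob M} : (massoc X Y Z ⊗ mid V) ∘ (massoc_inv X Y Z ⊗ mid V) = 1.
Proof. rewrite tc1, aai, tid; reflexivity. Qed.
Lemma aia_w {X Y Z V : mob M} : (massoc_inv X Y Z ⊗ mid V) ∘ (massoc X Y Z ⊗ mid V) = 1.
Proof. rewrite tc1, aia, tid; reflexivity. Qed.
Lemma w_aai_k {W X Y Z V : mob M} (k : mhom W _) :
  (mid V ⊗ massoc X Y Z) ∘ ((mid V ⊗ massoc_inv X Y Z) ∘ k) = k.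
Proof. rewrite cA, w_aai, idl; reflexivity. Qed.
Lemma w_aia_k {W X Y Z V : mob M} (k : mhom W _) :
  (mid V ⊗ massoc_inv X Y Z) ∘ ((mid V ⊗ massoc X Y Z) ∘ k) = k.
Proof. rewrite cA, w_aia, idl; reflexivity. Qed.
Lemma aai_w_k {W X Y Z V : mob M} (k : mhom W _) :
  (massoc X Y Z ⊗ mid V) ∘ ((massoc_inv X Y Z ⊗ mid V) ∘ k) = k.
Proof. rewrite cA, aai_w, idl; reflexivity. Qed.
Lemma aia_w_k {W X Y Z V : mob M} (k : mhom W _) :
  (massoc_inv X Y Z ⊗ mid V) ∘ ((massoc X Y Z ⊗ mid V) ∘ k) = k.
Proof. rewrite cA, aia_w, idl; reflexivity. Qed.
End K.

Ltac addk t k := lazymatch t with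
  | mcomp ?f ?g => let g' := addk g k in constr:(mcomp f g')
  | _ => constr:(mcomp t k) end.

Ltac mkk L H :=
  let T := type of L in
  lazymatch T with
  | @eq (@mhom ?s ?X ?Y) ?lhs ?rhs =>
      assert (H : forall ww__ (kk__ : @mhom s ww__ X),
                 ltac:(let a := addk lhs kk__ in let b := addk rhs kk__ in exact (a = b)))
                by (let W := fresh in let k := fresh in intros W k;
                    let L' := fresh in pose proof L as L';
                    rewrite ?cA in L'; rewrite ?cA; rewrite L'; reflexivity)
  end.
Ltac rwk L := first [ rewrite L | let H := fresh "Hk" in mkk L H; rewrite H; clear H ].
Ltac rwkr L := rwk (eq_sym L).
Tactic Notation "rwki" constr(L) hyp(H0) :=
  first [ rewrite L in H0 | let H := fresh "Hk" in mkk L H; rewrite H in H0; clear H ].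
Tactic Notation "rwkri" constr(L) hyp(H0) :=
  let L' := constr:(eq_sym L) in
  first [ rewrite L' in H0 | let H := fresh "Hk" in mkk L' H; rewrite H in H0; clear H ].
Ltac nf := repeat rewrite <- cA.
Tactic Notation "nf" "in" hyp(H) := repeat rewrite <- cA in H.

Section Kel.
Context {M : SMC}.
Let Ax := smc_ax M.
Local Notation "1" := (mid _).

Lemma K1 (X Y : mob M) : (mid X ⊗ mrunit Y) ∘ massoc X Y munit = mrunit (mtens X Y).
Proof.
  apply faith_r.
  pose proof (pentagon X Y munit munit) as P.
  apply (f_equal (fun z => (mid X ⊗ (mid Y ⊗ mlunit munit)) ∘ z)) in P.
  rewrite (cA _ (mid X ⊗ massoc _ _ _)), t1c, triangle in P.
  rewrite cA, <- nat_a in P.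
  rewrite (cA (mid X ⊗ (mid Y ⊗ mlunit munit))), <- nat_a, tid in P.
  nf. rewrite <- !cA in P. 
  rwki (triangle (mtens X Y) munit) P.
  apply (iso_cancel_l (massoc X Y munit)); [apply iso_assoc|].
  rewrite <- P, tc1. reflexivity.
Qed.

Lemma K2 (X Y : mob M) : mlunit X ⊗ mid Y = mlunit (mtens X Y) ∘ massoc munit X Y.
Proof.
  apply faith_l.
  apply (iso_cancel_r (massoc munit (mtens munit X) Y ∘ (massoc munit munit X ⊗ mid Y))).
  { apply iso_comp; [apply iso_tensm; [apply iso_assoc|apply iso_id]|apply iso_assoc]. }
  rewrite <- t1c. nf. rewrite (pentagon munit munit X Y).
  rwk (triangle munit (mtens X Y)). rewrite <- (tid X Y). rwkr (nat_a (mrunit munit) (mid X) (mid Y)).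
  rewrite <- triangle, <- tc1. nf.
  rwkr (nat_a (mid munit) (mlunit X) (mid Y)). reflexivity.
Qed.

Lemma K3 : mlunit (s:=M) munit = mrunit munit.
Proof.
  apply faith_r.
  rewrite <- triangle, K2.
  assert (E : mid (s:=M) munit ⊗ mlunit munit = mlunit (mtens munit munit)).
  { apply (iso_cancel_l (mlunit munit)); [apply iso_lunit|]. rewrite nat_l. reflexivity. }
  rewrite E. reflexivity.
Qed.

Lemma K4 (X : mob M) : mlunit X ∘ msym X munit = mrunit X.
Proof.
  apply faith_r.
  rewrite <- tc1. apply (iso_cancel_l (msym X munit)); [apply iso_sym|].
  rewrite <- triangle. rwk (nat_b (mid X) (mlunit munit)). rewrite !K2. nf.
  rwkr (nat_l (msym X munit)). rwkr (hexagon X munit munit). reflexivity.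
Qed.

Lemma K4' (X : mob M) : mrunit X ∘ msym munit X = mlunit X.
Proof.
  rewrite <- K4, <- cA, bb, idr. reflexivity.
Qed.

Lemma K5 : msym (s:=M) munit munit = mid _.
Proof.
  apply (iso_cancel_l (mlunit munit)); [apply iso_lunit|].
  rewrite K4, idr, K3. reflexivity.
Qed.
End Kel.

Ltac canc := repeat first [ rewrite aai_k | rewrite aia_k | rewrite lli_k | rewrite lil_k
  | rewrite rri_k | rewrite rir_k | rewrite bb_k | rewrite w_aai_k | rewrite w_aia_k
  | rewrite aai_w_k | rewrite aia_w_k
  | rewrite aai | rewrite aia | rewrite lli | rewrite lil | rewrite rri | rewrite rir
  | rewrite bb | rewrite w_aai | rewrite w_aia | rewrite aai_w | rewrite aia_w
  | rewrite tid | rewrite idl | rewrite idr ].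

Section Coh.
Context {M : SMC}.
Local Notation "1" := (mid _).

Lemma penB (W X Y Z : mob M) :
  massoc_inv (mtens W X) Y Z ∘ (massoc_inv W X (mtens Y Z) ∘ (mid W ⊗ massoc X Y Z))
  = (massoc_inv W X Y ⊗ mid Z) ∘ massoc_inv W (mtens X Y) Z.
Proof.
  apply (iso_cancel_l (massoc W X (mtens Y Z) ∘ massoc (mtens W X) Y Z)).
  { apply iso_comp; apply iso_assoc. }
  nf. canc. rwkr (pentagon W X Y Z). canc. reflexivity.
Qed.
Lemma penI (W X Y Z : mob M) :
  (massoc_inv W X Y ⊗ mid Z) ∘ (massoc_inv W (mtens X Y) Z ∘ (mid W ⊗ massoc_inv X Y Z))
  = massoc_inv (mtens W X) Y Z ∘ massoc_inv W X (mtens Y Z).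
Proof.
  apply (iso_cancel_l (massoc W X (mtens Y Z) ∘ massoc (mtens W X) Y Z)).
  { apply iso_comp; apply iso_assoc. }
  nf. canc. rwkr (pentagon W X Y Z). canc. reflexivity.
Qed.
Lemma penC (W X Y Z : mob M) :
  massoc_inv W X (mtens Y Z) ∘ (mid W ⊗ massoc X Y Z)
  = massoc (mtens W X) Y Z ∘ ((massoc_inv W X Y ⊗ mid Z) ∘ massoc_inv W (mtens X Y) Z).
Proof.
  rewrite <- penB. nf. canc. reflexivity.
Qed.
Lemma penD (W X Y Z : mob M) :
  massoc_inv W (mtens X Y) Z ∘ ((mid W ⊗ massoc_inv X Y Z) ∘ massoc W X (mtens Y Z))
  = (massoc W X Y ⊗ mid Z) ∘ massoc_inv (mtens W X) Y Z.
Proof.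
  apply (iso_cancel_l (massoc_inv W X Y ⊗ mid Z)).
  { apply iso_tensm; [apply iso_assoc_inv | apply iso_id]. }
  rwk (penI W X Y Z). canc. reflexivity.
Qed.
Lemma penE (W X Y Z : mob M) :
  (mid W ⊗ massoc_inv X Y Z) ∘ massoc W X (mtens Y Z)
  = massoc W (mtens X Y) Z ∘ ((massoc W X Y ⊗ mid Z) ∘ massoc_inv (mtens W X) Y Z).
Proof.
  rewrite <- penD. canc. reflexivity.
Qed.
Lemma penJ (W X Y Z : mob M) :
  massoc_inv W (mtens X Y) Z ∘ (mid W ⊗ massoc_inv X Y Z)
  = (massoc W X Y ⊗ mid Z) ∘ (massoc_inv (mtens W X) Y Z ∘ massoc_inv W X (mtens Y Z)).
Proof.
  rewrite <- penI. canc. reflexivity.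
Qed.

Definition tau (X Y Z : mob M) : mhom (mtens X (mtens Y Z)) (mtens Y (mtens X Z)) :=
  massoc Y X Z ∘ ((msym X Y ⊗ mid Z) ∘ massoc_inv X Y Z).

Lemma canon_tau (W X Y Z : mob M) :
  canon M W X Y Z = massoc_inv W Y (mtens X Z) ∘ ((mid W ⊗ tau X Y Z) ∘ massoc W X (mtens Y Z)).
Proof. unfold canon, tau. rewrite <- !t1c. nf. reflexivity. Qed.

Lemma nat_b1 {X X' Y Y' Z Z' : mob M} (x : mhom X X') (y : mhom Y Y') (z : mhom Z Z') :
  (msym X' Y' ⊗ mid Z') ∘ ((x ⊗ y) ⊗ z) = ((y ⊗ x) ⊗ z) ∘ (msym X Y ⊗ mid Z).
Proof. rewrite <- !tcomp, nat_b, idl, idr. reflexivity. Qed.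
Lemma nat_b1_k {W X X' Y Y' Z Z' : mob M} (x : mhom X X') (y : mhom Y Y') (z : mhom Z Z') (k : mhom W _) :
  (msym X' Y' ⊗ mid Z') ∘ (((x ⊗ y) ⊗ z) ∘ k) = ((y ⊗ x) ⊗ z) ∘ ((msym X Y ⊗ mid Z) ∘ k).
Proof. rewrite !cA, nat_b1. reflexivity. Qed.

Lemma tau_nat {X X' Y Y' Z Z' : mob M} (x : mhom X X') (y : mhom Y Y') (z : mhom Z Z') :
  tau X' Y' Z' ∘ (x ⊗ (y ⊗ z)) = (y ⊗ (x ⊗ z)) ∘ tau X Y Z.
Proof. unfold tau. nf. rewrite nat_ai, nat_b1_k, nat_a_k. reflexivity. Qed.
Lemma tau_nat_k {W X X' Y Y' Z Z' : mob M} (x : mhom X X') (y : mhom Y Y') (z : mhom Z Z') (k : mhom W _) :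
  tau X' Y' Z' ∘ ((x ⊗ (y ⊗ z)) ∘ k) = (y ⊗ (x ⊗ z)) ∘ (tau X Y Z ∘ k).
Proof. rewrite !cA, tau_nat. reflexivity. Qed.

Lemma bb_w {X Y V : mob M} : (msym Y X ⊗ mid V) ∘ (msym X Y ⊗ mid V) = 1.
Proof. rewrite tc1, bb, tid; reflexivity. Qed.
Lemma bb_w_k {W X Y V : mob M} (k : mhom W _) :
  (msym Y X ⊗ mid V) ∘ ((msym X Y ⊗ mid V) ∘ k) = k.
Proof. rewrite cA, bb_w, idl; reflexivity. Qed.
Lemma w_bb {X Y V : mob M} : (mid V ⊗ msym Y X) ∘ (mid V ⊗ msym X Y) = 1.
Proof. rewrite t1c, bb, tid; reflexivity. Qed.
Lemma w_bb_k {W X Y V : mob M} (k : mhom W _) :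
  (mid V ⊗ msym Y X) ∘ ((mid V ⊗ msym X Y) ∘ k) = k.
Proof. rewrite cA, w_bb, idl; reflexivity. Qed.

Lemma tau_inv (X Y Z : mob M) : tau Y X Z ∘ tau X Y Z = 1.
Proof. unfold tau. nf. canc. rewrite bb_w_k. canc. reflexivity. Qed.

Lemma Hb1 (X Y Z : mob M) :
  msym X (mtens Y Z) = massoc_inv Y Z X ∘ ((mid Y ⊗ msym X Z) ∘ tau X Y Z).
Proof.
  unfold tau. rwkr (hexagon X Y Z). canc. reflexivity.
Qed.

Lemma Hb2 (X Y Z : mob M) :
  msym (mtens X Y) Z = massoc Z X Y ∘ ((msym X Z ⊗ mid Y) ∘
     (massoc_inv X Z Y ∘ ((mid X ⊗ msym Y Z) ∘ massoc X Y Z))).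
Proof.
  apply (iso_cancel_l (msym Z (mtens X Y))); [apply iso_sym|].
  rewrite bb, Hb1. unfold tau. nf. canc. rewrite bb_w_k. canc. rewrite w_bb_k. canc. reflexivity.
Qed.


Lemma tauP2 (X Y Z W : mob M) :
  tau X Y (mtens Z W) = (mid Y ⊗ massoc X Z W) ∘ (massoc Y (mtens X Z) W ∘
    ((tau X Y Z ⊗ mid W) ∘ (massoc_inv X (mtens Y Z) W ∘ (mid X ⊗ massoc_inv Y Z W)))).
Proof.
  unfold tau. rewrite <- !tc1. nf.
  let H := fresh "Hk" in mkk (pentagon Y X Z W) H; rewrite H; clear H. rwk (penI X Y Z W). rewrite nat_a_k. canc. reflexivity.
Qed.

Lemma tauP4 (X1 X2 Y Z : mob M) :
  tau (mtens X1 X2) Y Z = (mid Y ⊗ massoc_inv X1 X2 Z) ∘ (tau X1 Y (mtens X2 Z) ∘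
     ((mid X1 ⊗ tau X2 Y Z) ∘ massoc X1 X2 (mtens Y Z))).
Proof.
  unfold tau. rewrite Hb2. rewrite <- !tc1. rewrite <- !t1c. nf.
  rwk (penE Y X1 X2 Z). rewrite <- (tid X2 Z). rewrite nat_ai_k.
  rwk (penB X1 Y X2 Z). rewrite nat_ai_k. rwk (penD X1 X2 Y Z). reflexivity.
Qed.

Lemma tauP3 (X Y1 Y2 Z : mob M) :
  tau X (mtens Y1 Y2) Z = massoc_inv Y1 Y2 (mtens X Z) ∘ ((mid Y1 ⊗ tau X Y2 Z) ∘
     (tau X Y1 (mtens Y2 Z) ∘ (mid X ⊗ massoc Y1 Y2 Z))).
Proof.
  unfold tau at 1. rewrite Hb1. unfold tau. rewrite <- !tc1. rewrite <- !t1c. nf.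
  rwk (penC Y1 Y2 X Z). rewrite nat_ai_k. rwk (penD Y1 X Y2 Z).
  rewrite <- (tid Y2 Z). rewrite nat_ai_k. rwk (penB X Y1 Y2 Z). reflexivity.
Qed.


Lemma penF (W X Y Z : mob M) :
  massoc (mtens W X) Y Z ∘ (massoc_inv W X Y ⊗ mid Z)
  = massoc_inv W X (mtens Y Z) ∘ ((mid W ⊗ massoc X Y Z) ∘ massoc W (mtens X Y) Z).
Proof.
  apply (iso_cancel_l (massoc W X (mtens Y Z))); [apply iso_assoc|].
  nf. rwkr (pentagon W X Y Z). canc. reflexivity.
Qed.

Lemma w_inv {V X Y : mob M} {f : mhom X Y} {g : mhom Y X} (H : g ∘ f = mid X) :
  (mid V ⊗ g) ∘ (mid V ⊗ f) = mid (mtens V X).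
Proof. rewrite t1c, H, tid. reflexivity. Qed.
Lemma w_inv_k {V X Y W : mob M} {f : mhom X Y} {g : mhom Y X} (H : g ∘ f = mid X) (k : mhom W _) :
  (mid V ⊗ g) ∘ ((mid V ⊗ f) ∘ k) = k.
Proof. rewrite cA, (w_inv H), idl. reflexivity. Qed.

Lemma tauP2' (A Y B V : mob M) :
  massoc Y (mtens A B) V ∘ (tau A Y B ⊗ mid V) =
  (mid Y ⊗ massoc_inv A B V) ∘ (tau A Y (mtens B V) ∘ ((mid A ⊗ massoc Y B V) ∘ massoc A (mtens Y B) V)).
Proof.
  rewrite tauP2. nf. canc. reflexivity.
Qed.

Lemma M1 (X A Y B Z C : mob M) :
  (massoc X Y Z ⊗ massoc A B C) ∘ (canon M (mtens X Y) (mtens A B) Z C ∘ (canon M X A Y B ⊗ mid (mtens Z C)))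
  = canon M X A (mtens Y Z) (mtens B C) ∘ ((mid (mtens X A) ⊗ canon M Y B Z C) ∘
      massoc (mtens X A) (mtens Y B) (mtens Z C)).
Proof.
  rewrite !canon_tau. rewrite <- !tc1. rewrite <- !t1c. nf.
  rewrite <- (tid X A). rewrite !nat_a_k.
  rewrite tauP3. rewrite <- !t1c. nf. rewrite (w_inv_k w_aai).
  rwk (t1c (X:=X) (mid A ⊗ (mid Y ⊗ tau B Z C)) (tau A Y (mtens Z (mtens B C)))).
  rewrite tau_nat. rewrite <- t1c. nf.
  rwk (penF X Y (mtens A B) (mtens Z C)). rewrite nat_a_k.
  rwk (t1c (X:=X) (tau A Y B ⊗ mid (mtens Z C)) (massoc Y (mtens A B) (mtens Z C))).
  rewrite tauP2'. rewrite <- !t1c. nf.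
  rwk (pentagon X A (mtens Y B) (mtens Z C)).
  rwkr (nat_a (mid X) (mid A) (massoc Y B (mtens Z C))).
  rewrite <- (tid X Y). rewrite <- nat_ai_k.
  rewrite tauP4. rewrite <- !t1c. nf. rewrite (w_inv_k w_aai).
  rewrite (tsl (massoc X Y Z) (massoc A B C)). nf.
  rewrite <- (tid (mtens X Y) Z). rewrite <- nat_ai_k.
  rewrite <- (tid X Y). rewrite <- nat_ai_k.
  rewrite (w_inv_k (w_inv w_aai)).
  rwkr (penJ X Y Z (mtens A (mtens B C))).
  reflexivity.
Qed.


Lemma K1' (X Y : mob M) : mrunit (mtens X Y) ∘ massoc_inv X Y munit = mid X ⊗ mrunit Y.
Proof. rewrite <- K1. nf. canc. reflexivity. Qed.
Lemma K2' (X Y : mob M) : (mlunit X ⊗ mid Y) ∘ massoc_inv munit X Y = mlunit (mtens X Y).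
Proof. rewrite K2. nf. canc. reflexivity. Qed.
Lemma tri' (X Y : mob M) : (mrunit X ⊗ mid Y) ∘ massoc_inv X munit Y = mid X ⊗ mlunit Y.
Proof. rewrite <- triangle. nf. canc. reflexivity. Qed.

Lemma wt {X X' Y Y' Y'' : mob M} (f : mhom X X') (h : mhom Y Y') (g : mhom Y' Y'') :
  (mid X' ⊗ g) ∘ (f ⊗ h) = f ⊗ (g ∘ h).
Proof. rewrite <- tcomp, idl. reflexivity. Qed.
Lemma wt' {X X' Y Y' Y'' : mob M} (f : mhom X X') (h : mhom Y Y') (g : mhom Y' Y'') :
  f ⊗ (g ∘ h) = (f ⊗ g) ∘ (mid X ⊗ h).
Proof. rewrite <- tcomp, idr. reflexivity. Qed.

Lemma m_nat {W W' X X' Y Y' Z Z' : mob M} (w : mhom W W') (x : mhom X X') (y : mhom Y Y') (z : mhom Z Z') :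
  canon M W' X' Y' Z' ∘ ((w ⊗ x) ⊗ (y ⊗ z)) = ((w ⊗ y) ⊗ (x ⊗ z)) ∘ canon M W X Y Z.
Proof.
  rewrite !canon_tau. nf. rewrite nat_a. rewrite (cA (mid W' ⊗ tau X' Y' Z')), wt, tau_nat, wt', <- cA.
  rewrite nat_ai_k. reflexivity.
Qed.

Lemma m_invol (W X Y Z : mob M) : canon M W Y X Z ∘ canon M W X Y Z = mid _.
Proof.
  rewrite !canon_tau. nf. canc. rewrite (w_inv_k (tau_inv _ _ _)). canc. reflexivity.
Qed.

Lemma tau_u2 (X Z : mob M) : mlunit (mtens X Z) ∘ tau X munit Z = mid X ⊗ mlunit Z.
Proof.
  unfold tau. nf. rwkr (K2 X Z). rewrite tc1_k, K4, tri'. reflexivity.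
Qed.
Lemma tau_u1 (Y Z : mob M) : (mid Y ⊗ mlunit Z) ∘ tau munit Y Z = mlunit (mtens Y Z).
Proof.
  unfold tau. nf. rwk (triangle Y Z). rewrite tc1_k, K4', K2'. reflexivity.
Qed.

Lemma U1 (Y Y' : mob M) :
  mrunit (mtens Y Y') ∘ ((mid (mtens Y Y') ⊗ mlunit munit) ∘ canon M Y munit Y' munit)
  = mrunit Y ⊗ mrunit Y'.
Proof.
  rewrite (tsl (mrunit Y)), <- triangle. nf. rewrite <- (tid Y munit), nat_a.
  rewrite t1c_k, nat_l.
  rewrite canon_tau. rewrite <- (tid Y Y'), <- nat_ai_k. rwk (K1' Y Y').
  rewrite !t1c_k. nf. rwk (tau_u1 Y' munit). reflexivity.
Qed.

Lemma M2 (Y A : mob M) :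
  (mid Y ⊗ mlunit A) ∘ ((mlunit Y ⊗ mid (mtens munit A)) ∘ (canon M munit munit Y A ∘
    (mrunit_inv munit ⊗ mid (mtens Y A)))) = mlunit (mtens Y A).
Proof.
  rewrite cA, <- tcomp, idl, idr, tsl. rewrite canon_tau. nf.
  rewrite <- (tid munit Y), <- nat_ai_k. rwk (K2' Y A).
  rewrite t1c_k, tau_u1. rwk (triangle munit (mtens Y A)). rewrite tc1, rri, tid, idr. reflexivity.
Qed.

Lemma M2' (Y A : mob M) :
  (mid Y ⊗ mrunit A) ∘ ((mrunit Y ⊗ mid (mtens A munit)) ∘ (canon M Y A munit munit ∘
    (mid (mtens Y A) ⊗ mrunit_inv munit))) = mrunit (mtens Y A).
Proof.
  rewrite cA, <- tcomp, idl, idr, tsl. rewrite canon_tau. nf.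
  rewrite <- (tid Y munit), <- nat_ai_k. rwk (tri' Y A).
  rewrite !t1c_k. nf. rewrite nat_l_k. rewrite tau_u2. rewrite K3.
  rewrite <- (tid Y A), nat_a, t1c_k. nf. rewrite t1c, rri, tid, idr.
  apply K1.
Qed.

Lemma tau_a_b (Z W X : mob M) : tau Z W X ∘ (massoc Z W X ∘ (msym W Z ⊗ mid X)) = massoc W Z X.
Proof. unfold tau. nf. canc. rewrite bb_w, idr. reflexivity. Qed.
Lemma tau_unf (W Y V : mob M) : massoc_inv Y W V ∘ tau W Y V = (msym W Y ⊗ mid V) ∘ massoc_inv W Y V.
Proof. unfold tau. nf. canc. reflexivity. Qed.

Lemma M3 (W X Y Z : mob M) :
  (msym W Y ⊗ msym X Z) ∘ canon M W X Y Z = canon M Y Z W X ∘ msym (mtens W X) (mtens Y Z).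
Proof.
  rewrite Hb2, !Hb1, !canon_tau. rewrite <- !tc1, <- !t1c. nf.
  rwkr (pentagon Y Z W X). canc. rewrite nat_a_k.
  rwk (t1c (X:=Y) (msym W Z ⊗ mid X) (massoc Z W X)).
  rwk (t1c (X:=Y) (massoc Z W X ∘ (msym W Z ⊗ mid X)) (tau Z W X)).
  rewrite tau_a_b. rwkr (tauP2 W Y Z X).
  rewrite tau_nat_k, nat_ai_k. rwk (tau_unf W Y (mtens X Z)).
  rewrite tid. rwkr (tsr (msym W Y) (msym X Z)). reflexivity.
Qed.
End Coh.

Section P1.
Context {M : SMC}.
Local Notation "1" := (mid _).

Definition mkr {X Y : mob M} (A : wob M) (f : mhom X (mtens Y (proj1_sig A))) : prep M X Y :=
  existT (fun A : wob M => mhom X (mtens Y (proj1_sig A))) A f.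

Lemma prep_eta {X Y : mob M} (r : prep M X Y) : r = mkr (projT1 r) (projT2 r).
Proof. destruct r; reflexivity. Qed.

Lemma prel_mk {X Y : mob M} (A A' : wob M) (f : mhom X (mtens Y (proj1_sig A)))
  (f' : mhom X (mtens Y (proj1_sig A'))) (al : mhom (proj1_sig A) (proj1_sig A')) :
  is_iso M al -> (mid Y ⊗ al) ∘ f = f' -> prel M (mkr A f) (mkr A' f').
Proof. intros H1 H2. exists al. split; assumption. Qed.

Lemma prel_refl {X Y : mob M} (r : prep M X Y) : prel M r r.
Proof. exists (mid _). split; [apply iso_id|]. rewrite tid, idl. reflexivity. Qed.
Lemma prel_sym {X Y : mob M} (r s : prep M X Y) : prel M r s -> prel M s r.
Proof.
  intros [al [[al' [H1 H2]] H]]. exists al'. split.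
  - exists al. split; assumption.
  - rewrite <- H, cA, t1c, H1, tid, idl. reflexivity.
Qed.
Lemma prel_trans {X Y : mob M} (r s t : prep M X Y) : prel M r s -> prel M s t -> prel M r t.
Proof.
  intros [al [Ha H]] [be [Hb H']]. exists (be ∘ al). split.
  - apply iso_comp; assumption.
  - rewrite <- t1c, <- cA, H, H'. reflexivity.
Qed.

Lemma pmk_eq {X Y : mob M} (r s : prep M X Y) : prel M r s -> pmk M r = pmk M s.
Proof.
  intros H. unfold pmk. apply subset_eq_compat. unfold pcls.
  apply functional_extensionality. intros t. apply propositional_extensionality. split; intros H'.
  - apply (prel_trans _ r); [apply prel_sym|]; assumption.
  - apply (prel_trans _ s); assumption.
Qed.
Lemma pmk_inj {X Y : mob M} (r s : prep M X Y) : pmk M r = pmk M s -> prel M r s.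
Proof.
  intros H. apply (f_equal (@proj1_sig _ _)) in H. simpl in H. unfold pcls in H.
  apply (f_equal (fun P => P s)) in H. rewrite H. apply prel_refl.
Qed.
Lemma pmk_prep_of {X Y : mob M} (S : phom M X Y) : pmk M (prep_of M S) = S.
Proof.
  unfold prep_of. destruct (constructive_indefinite_description _ _) as [r0 E]. simpl.
  destruct S as [P HP]. simpl in E. subst P. unfold pmk. apply subset_eq_compat. reflexivity.
Qed.
Lemma prep_of_pmk {X Y : mob M} (r : prep M X Y) : prel M r (prep_of M (pmk M r)).
Proof. apply pmk_inj. rewrite pmk_prep_of. reflexivity. Qed.

Lemma rcomp_l {X Y Z : mob M} (r r' : prep M Y Z) (s : prep M X Y) :
  prel M r r' -> prel M (rcomp M r s) (rcomp M r' s).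
Proof.
  destruct r as [B g], r' as [B' g'], s as [A f]. intros [be [Hb H]]. simpl in *.
  apply (prel_mk (wtens M B A) (wtens M B' A) _ _ (be ⊗ mid _)). { apply iso_tensm; [assumption|apply iso_id]. }
  simpl. nf. rewrite <- nat_a_k. rewrite tc1_k, H. reflexivity.
Qed.
Lemma rcomp_r {X Y Z : mob M} (r : prep M Y Z) (s s' : prep M X Y) :
  prel M s s' -> prel M (rcomp M r s) (rcomp M r s').
Proof.
  destruct r as [B g], s' as [A' f'], s as [A f]. intros [al [Ha H]]. simpl in *.
  apply (prel_mk (wtens M B A) (wtens M B A') _ _ (mid _ ⊗ al)). { apply iso_tensm; [apply iso_id|assumption]. }
  simpl. nf. rewrite <- nat_a_k. rewrite tid. rewrite <- H.
  rewrite (cA (mid _ ⊗ al)), (cA (g ⊗ mid _)), <- tsl, <- tsr. reflexivity.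
Qed.
Lemma rtens_l {X Y X' Y' : mob M} (r r' : prep M X Y) (s : prep M X' Y') :
  prel M r r' -> prel M (rtens M r s) (rtens M r' s).
Proof.
  destruct r as [A f], r' as [A' f'], s as [B g]. intros [al [Ha H]]. simpl in *.
  apply (prel_mk (wtens M A B) (wtens M A' B) _ _ (al ⊗ mid _)). { apply iso_tensm; [assumption|apply iso_id]. }
  simpl. rewrite <- (tid Y Y'). fold (canon M Y (proj1_sig A') Y' (proj1_sig B)).
  fold (canon M Y (proj1_sig A) Y' (proj1_sig B)).
  rewrite cA, <- m_nat, <- cA, <- tcomp, H, tid, idl. reflexivity.
Qed.
Lemma rtens_r {X Y X' Y' : mob M} (r : prep M X Y) (s s' : prep M X' Y') :
  prel M s s' -> prel M (rtens M r s) (rtens M r s').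
Proof.
  destruct r as [A f], s' as [B' g'], s as [B g]. intros [al [Ha H]]. simpl in *.
  apply (prel_mk (wtens M A B) (wtens M A B') _ _ (mid _ ⊗ al)). { apply iso_tensm; [apply iso_id|assumption]. }
  simpl. rewrite <- (tid Y Y'). fold (canon M Y (proj1_sig A) Y' (proj1_sig B')).
  fold (canon M Y (proj1_sig A) Y' (proj1_sig B)).
  rewrite cA, <- m_nat, <- cA, <- tcomp, H, tid, idl. reflexivity.
Qed.

Lemma pcomp_pmk {X Y Z : mob M} (r : prep M Y Z) (s : prep M X Y) :
  pcomp M (pmk M r) (pmk M s) = pmk M (rcomp M r s).
Proof.
  unfold pcomp. apply pmk_eq. apply (prel_trans _ (rcomp M r (prep_of M (pmk M s)))).
  - apply rcomp_l, prel_sym, prep_of_pmk.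
  - apply rcomp_r, prel_sym, prep_of_pmk.
Qed.
Lemma ptensm_pmk {X Y X' Y' : mob M} (r : prep M X Y) (s : prep M X' Y') :
  ptensm M (pmk M r) (pmk M s) = pmk M (rtens M r s).
Proof.
  unfold ptensm. apply pmk_eq. apply (prel_trans _ (rtens M r (prep_of M (pmk M s)))).
  - apply rtens_l, prel_sym, prep_of_pmk.
  - apply rtens_r, prel_sym, prep_of_pmk.
Qed.

End P1.

Section P2.
Context {M : SMC}.
Local Notation "1" := (mid _).

Definition rpi {X Y : mob M} (f : mhom X Y) : prep M X Y := mkr (wunit M) (mrunit_inv Y ∘ f).

Lemma pi_m_rpi {X Y : mob M} (f : mhom X Y) : pi_m M f = pmk M (rpi f).
Proof. reflexivity. Qed.
Lemma pid_pi (X : mob M) : pid M X = pi_m M (mid X).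
Proof. unfold pid, pi_m. rewrite idr. reflexivity. Qed.

Lemma L_pil {X Y Z : mob M} (h : mhom Y Z) (A : wob M) (f : mhom X (mtens Y (proj1_sig A))) :
  prel M (rcomp M (rpi h) (mkr A f)) (mkr A ((h ⊗ mid _) ∘ f)).
Proof.
  apply (prel_mk (wtens M (wunit M) A) A _ _ (mlunit _)); [apply iso_lunit|]. simpl.
  rwk (triangle Z (proj1_sig A)). rewrite tc1_k. nf. rewrite rri_k. reflexivity.
Qed.
Lemma L_pir {X Y Z : mob M} (B : wob M) (g : mhom Y (mtens Z (proj1_sig B))) (h : mhom X Y) :
  prel M (rcomp M (mkr B g) (rpi h)) (mkr B (g ∘ h)).
Proof.
  apply (prel_mk (wtens M B (wunit M)) B _ _ (mrunit _)); [apply iso_runit|]. simpl.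
  rwk (K1 Z (proj1_sig B)). rewrite nat_r_k, rri_k. reflexivity.
Qed.
Lemma L_assoc {X Y Z W : mob M} (r : prep M Z W) (s : prep M Y Z) (t : prep M X Y) :
  prel M (rcomp M r (rcomp M s t)) (rcomp M (rcomp M r s) t).
Proof.
  destruct r as [C h], s as [B g], t as [A f].
  apply (prel_mk (wtens M C (wtens M B A)) (wtens M (wtens M C B) A) _ _
    (massoc_inv (proj1_sig C) (proj1_sig B) (proj1_sig A))); [apply iso_assoc_inv|]. simpl.
  rewrite <- !tc1. nf. rewrite <- (tid (proj1_sig B) (proj1_sig A)). rewrite <- (nat_a_k h).
  rwkr (pentagon W (proj1_sig C) (proj1_sig B) (proj1_sig A)). canc. reflexivity.
Qed.

Lemma pcomp_pi {X Y Z : mob M} (g : mhom Y Z) (f : mhom X Y) :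
  pcomp M (pi_m M g) (pi_m M f) = pi_m M (g ∘ f).
Proof.
  rewrite !pi_m_rpi, pcomp_pmk. apply pmk_eq. eapply prel_trans; [apply L_pil|].
  unfold rpi. simpl. rewrite <- nat_ri_k. apply prel_refl.
Qed.

Lemma U1' (Y Y' : mob M) :
  (mid (mtens Y Y') ⊗ mlunit munit) ∘ canon M Y munit Y' munit
  = mrunit_inv (mtens Y Y') ∘ (mrunit Y ⊗ mrunit Y').
Proof. rewrite <- U1. canc. reflexivity. Qed.

Lemma ptensm_pi {X Y X' Y' : mob M} (f : mhom X Y) (g : mhom X' Y') :
  ptensm M (pi_m M f) (pi_m M g) = pi_m M (f ⊗ g).
Proof.
  rewrite !pi_m_rpi, ptensm_pmk. apply pmk_eq.
  apply (prel_mk (wtens M (wunit M) (wunit M)) (wunit M) _ _ (mlunit munit)); [apply iso_lunit|].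
  simpl. rewrite cA, U1'. nf. rewrite <- tcomp. nf. rewrite !rri_k. reflexivity.
Qed.

End P2.

Section P3.
Context {M : SMC}.
Local Notation "1" := (mid _).

Lemma m_invol_k {V W X Y Z : mob M} (k : mhom V _) : canon M W Y X Z ∘ (canon M W X Y Z ∘ k) = k.
Proof. rewrite cA, m_invol, idl. reflexivity. Qed.
Lemma m_invol_w_k {V W X Y Z U : mob M} (k : mhom V _) :
  (canon M W Y X Z ⊗ mid U) ∘ ((canon M W X Y Z ⊗ mid U) ∘ k) = k.
Proof. rewrite cA, tc1, m_invol, tid, idl. reflexivity. Qed.

Lemma TC (Z Z' B B' A A' : mob M) :
  (mid (mtens Z Z') ⊗ canon M B A B' A') ∘ (canon M Z (mtens B A) Z' (mtens B' A') ∘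
     (massoc Z B A ⊗ massoc Z' B' A'))
  = massoc (mtens Z Z') (mtens B B') (mtens A A') ∘ ((canon M Z B Z' B' ⊗ mid _) ∘
     canon M (mtens Z B) A (mtens Z' B') A').
Proof.
  apply (iso_cancel_r (canon M (mtens Z B) (mtens Z' B') A A' ∘ (canon M Z Z' B B' ⊗ mid _))).
  { apply iso_comp; [apply iso_tensm; [|apply iso_id]|];
    [exists (canon M Z B Z' B') | exists (canon M (mtens Z B) A (mtens Z' B') A')];
    split; apply m_invol. }
  nf. rewrite m_invol_k, tc1, m_invol, tid, idr.
  rwk (M1 Z Z' B B' A A'). rewrite m_invol_k. rewrite (w_inv_k (m_invol _ _ _ _)).
  reflexivity.
Qed.


Lemma m_nat_k {V W W' X X' Y Y' Z Z' : mob M} (w : mhom W W') (x : mhom X X') (y : mhom Y Y') (z : mhom Z Z') (k : mhom V _) :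
  canon M W' X' Y' Z' ∘ (((w ⊗ x) ⊗ (y ⊗ z)) ∘ k) = ((w ⊗ y) ⊗ (x ⊗ z)) ∘ (canon M W X Y Z ∘ k).
Proof. rewrite !cA, m_nat. reflexivity. Qed.
Lemma tw' {X X' X'' Y Y' : mob M} (f : mhom X X') (g : mhom X' X'') (h : mhom Y Y') :
  (g ∘ f) ⊗ h = (g ⊗ mid Y') ∘ (f ⊗ h).
Proof. rewrite <- tcomp, idl. reflexivity. Qed.

Lemma pid_pmk (X : mob M) : pid M X = pmk M (mkr (wunit M) (mrunit_inv X)).
Proof. reflexivity. Qed.
Lemma pmk_surj {X Y : mob M} (S : phom M X Y) : exists A f, S = pmk M (mkr A f).
Proof. rewrite <- (pmk_prep_of S). destruct (prep_of M S) as [A f]. exists A, f. reflexivity. Qed.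

Lemma L_tc {X Y Z X' Y' Z' : mob M} (B : wob M) (g : mhom Y (mtens Z (proj1_sig B)))
  (A : wob M) (f : mhom X (mtens Y (proj1_sig A)))
  (B' : wob M) (g' : mhom Y' (mtens Z' (proj1_sig B')))
  (A' : wob M) (f' : mhom X' (mtens Y' (proj1_sig A'))) :
  prel M (rtens M (rcomp M (mkr B g) (mkr A f)) (rcomp M (mkr B' g') (mkr A' f')))
         (rcomp M (rtens M (mkr B g) (mkr B' g')) (rtens M (mkr A f) (mkr A' f'))).
Proof.
  apply (prel_mk (wtens M (wtens M B A) (wtens M B' A')) (wtens M (wtens M B B') (wtens M A A')) _ _
    (canon M (proj1_sig B) (proj1_sig A) (proj1_sig B') (proj1_sig A'))).
  { exists (canon M (proj1_sig B) (proj1_sig B') (proj1_sig A) (proj1_sig A')); split; apply m_invol. }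
  simpl. rewrite !tcomp. rewrite <- tc1. nf. rewrite <- (tid (proj1_sig A) (proj1_sig A')).
  rewrite <- m_nat_k. rwk (TC Z Z' (proj1_sig B) (proj1_sig B') (proj1_sig A) (proj1_sig A')).
  rewrite tid. reflexivity.
Qed.

End P3.

Section P4.
Context {M : SMC}.
Local Notation "1" := (mid _).

Lemma L_assoc_nat {X Y Z X' Y' Z' : mob M}
  (A : wob M) (f : mhom X (mtens X' (proj1_sig A)))
  (B : wob M) (g : mhom Y (mtens Y' (proj1_sig B)))
  (C : wob M) (h : mhom Z (mtens Z' (proj1_sig C))) :
  pcomp M (pi_m M (massoc X' Y' Z')) (ptensm M (ptensm M (pmk M (mkr A f)) (pmk M (mkr B g))) (pmk M (mkr C h)))
  = pcomp M (ptensm M (pmk M (mkr A f)) (ptensm M (pmk M (mkr B g)) (pmk M (mkr C h)))) (pi_m M (massoc X Y Z)).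
Proof.
  rewrite pi_m_rpi, pi_m_rpi, !ptensm_pmk, !pcomp_pmk. apply pmk_eq.
  eapply prel_trans; [apply L_pil|]. eapply prel_trans; [|apply prel_sym, L_pir].
  apply (prel_mk (wtens M (wtens M A B) C) (wtens M A (wtens M B C)) _ _
    (massoc (proj1_sig A) (proj1_sig B) (proj1_sig C))); [apply iso_assoc|].
  simpl. rwkr (tsr (massoc X' Y' Z') (massoc (proj1_sig A) (proj1_sig B) (proj1_sig C))).
  rewrite tw'. nf. rwk (M1 X' (proj1_sig A) Y' (proj1_sig B) Z' (proj1_sig C)).
  rewrite nat_a. rewrite <- wt. nf. reflexivity.
Qed.


Lemma L_lunit_nat {X Y : mob M} (A : wob M) (f : mhom X (mtens Y (proj1_sig A))) :
  pcomp M (pi_m M (mlunit Y)) (ptensm M (pid M munit) (pmk M (mkr A f)))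
  = pcomp M (pmk M (mkr A f)) (pi_m M (mlunit X)).
Proof.
  rewrite pi_m_rpi, pi_m_rpi, pid_pmk, !ptensm_pmk, !pcomp_pmk. apply pmk_eq.
  eapply prel_trans; [apply L_pil|]. eapply prel_trans; [|apply prel_sym, L_pir].
  apply (prel_mk (wtens M (wunit M) A) A _ _ (mlunit _)); [apply iso_lunit|].
  simpl. rewrite (tsl (mrunit_inv munit) f). nf. rwk (M2 Y (proj1_sig A)). apply nat_l.
Qed.

Lemma L_runit_nat {X Y : mob M} (A : wob M) (f : mhom X (mtens Y (proj1_sig A))) :
  pcomp M (pi_m M (mrunit Y)) (ptensm M (pmk M (mkr A f)) (pid M munit))
  = pcomp M (pmk M (mkr A f)) (pi_m M (mrunit X)).
Proof.
  rewrite pi_m_rpi, pi_m_rpi, pid_pmk, !ptensm_pmk, !pcomp_pmk. apply pmk_eq.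
  eapply prel_trans; [apply L_pil|]. eapply prel_trans; [|apply prel_sym, L_pir].
  apply (prel_mk (wtens M A (wunit M)) A _ _ (mrunit _)); [apply iso_runit|].
  simpl. rewrite (tsr f (mrunit_inv munit)). nf. rwk (M2' Y (proj1_sig A)). apply nat_r.
Qed.

Lemma L_sym_nat {X Y X' Y' : mob M} (A : wob M) (f : mhom X (mtens X' (proj1_sig A)))
  (B : wob M) (g : mhom Y (mtens Y' (proj1_sig B))) :
  pcomp M (pi_m M (msym X' Y')) (ptensm M (pmk M (mkr A f)) (pmk M (mkr B g)))
  = pcomp M (ptensm M (pmk M (mkr B g)) (pmk M (mkr A f))) (pi_m M (msym X Y)).
Proof.
  rewrite pi_m_rpi, pi_m_rpi, !ptensm_pmk, !pcomp_pmk. apply pmk_eq.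
  eapply prel_trans; [apply L_pil|]. eapply prel_trans; [|apply prel_sym, L_pir].
  apply (prel_mk (wtens M A B) (wtens M B A) _ _ (msym (proj1_sig A) (proj1_sig B))); [apply iso_sym|].
  simpl. rwkr (tsr (msym X' Y') (msym (proj1_sig A) (proj1_sig B))).
  rwk (M3 X' (proj1_sig A) Y' (proj1_sig B)). rewrite nat_b. nf. reflexivity.
Qed.

Lemma P_axioms : smc_axioms (P_data M).
Proof.
  constructor; cbn [mcomp mid mtensm mtens munit massoc massoc_inv mlunit mlunit_inv
     mrunit mrunit_inv msym P_data].
  - intros W X Y Z h g f.
    destruct (pmk_surj h) as [C [h' ->]], (pmk_surj g) as [B [g' ->]], (pmk_surj f) as [A [f' ->]].
    rewrite !pcomp_pmk. apply pmk_eq, L_assoc.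
  - intros X Y f. destruct (pmk_surj f) as [A [f' ->]].
    rewrite pid_pi, pi_m_rpi, pcomp_pmk. apply pmk_eq. eapply prel_trans; [apply L_pil|].
    rewrite tid, idl. apply prel_refl.
  - intros X Y f. destruct (pmk_surj f) as [A [f' ->]].
    rewrite pid_pi, pi_m_rpi, pcomp_pmk. apply pmk_eq. eapply prel_trans; [apply L_pir|].
    rewrite idr. apply prel_refl.
  - intros X Y. rewrite !pid_pi, ptensm_pi, tid. reflexivity.
  - intros X X' X'' Y Y' Y'' f f' g g'.
    destruct (pmk_surj f) as [A [f0 ->]], (pmk_surj f') as [B [f1 ->]],
      (pmk_surj g) as [A' [g0 ->]], (pmk_surj g') as [B' [g1 ->]].
    rewrite !pcomp_pmk, !ptensm_pmk, pcomp_pmk. apply pmk_eq. apply L_tc.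
  - intros X X' Y Y' Z Z' f g h.
    destruct (pmk_surj f) as [A [f0 ->]], (pmk_surj g) as [B [g0 ->]], (pmk_surj h) as [C [h0 ->]].
    apply L_assoc_nat.
  - intros X Y f. destruct (pmk_surj f) as [A [f0 ->]]. apply L_lunit_nat.
  - intros X Y f. destruct (pmk_surj f) as [A [f0 ->]]. apply L_runit_nat.
  - intros X X' Y Y' f g. destruct (pmk_surj f) as [A [f0 ->]], (pmk_surj g) as [B [g0 ->]].
    apply L_sym_nat.
  - intros. rewrite pcomp_pi, aia, pid_pi. reflexivity.
  - intros. rewrite pcomp_pi, aai, pid_pi. reflexivity.
  - intros. rewrite pcomp_pi, lil, pid_pi. reflexivity.
  - intros. rewrite pcomp_pi, lli, pid_pi. reflexivity.
  - intros. rewrite pcomp_pi, rir, pid_pi. reflexivity.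
  - intros. rewrite pcomp_pi, rri, pid_pi. reflexivity.
  - intros. rewrite pcomp_pi, bb, pid_pi. reflexivity.
  - intros. rewrite !pid_pi, !ptensm_pi, pcomp_pi, triangle. reflexivity.
  - intros. rewrite !pid_pi, !ptensm_pi, !pcomp_pi, pentagon. reflexivity.
  - intros. rewrite !pid_pi, !ptensm_pi, !pcomp_pi, hexagon. reflexivity.
Qed.

End P4.

Section Full.
Context {M : SMC}.
Local Notation "1" := (mid _).

Lemma tw_inv {V X Y : mob M} {f : mhom X Y} {g : mhom Y X} (H : g ∘ f = mid X) :
  (g ⊗ mid V) ∘ (f ⊗ mid V) = mid (mtens X V).
Proof. rewrite tc1, H, tid. reflexivity. Qed.
Lemma tw_inv_k {V X Y W : mob M} {f : mhom X Y} {g : mhom Y X} (H : g ∘ f = mid X) (k : mhom W _) :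
  (g ⊗ mid V) ∘ ((f ⊗ mid V) ∘ k) = k.
Proof. rewrite cA, (tw_inv H), idl. reflexivity. Qed.

Lemma faithful_w (Y Y' : mob M) (e1 : mhom (mtens Y Y') munit) (He1 : is_iso M e1)
  {P Q : mob M} (z1 z2 : mhom P Q) : mid Y' ⊗ z1 = mid Y' ⊗ z2 -> z1 = z2.
Proof.
  intros H. apply (f_equal (fun z => mid Y ⊗ z)) in H.
  assert (E : forall z : mhom P Q, (mlunit Q ∘ ((e1 ⊗ mid Q) ∘ massoc_inv Y Y' Q)) ∘ (mid Y ⊗ (mid Y' ⊗ z))
    = z ∘ (mlunit P ∘ ((e1 ⊗ mid P) ∘ massoc_inv Y Y' P))).
  { intros z. nf. rewrite nat_ai. rewrite (cA (e1 ⊗ mid Q)), <- tcomp, tid, idr, idl, (tsr e1 z).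
    nf. rewrite nat_l_k. reflexivity. }
  apply (iso_cancel_r (mlunit P ∘ ((e1 ⊗ mid P) ∘ massoc_inv Y Y' P))).
  { apply iso_comp; [apply iso_comp; [apply iso_assoc_inv | apply iso_tensm; [assumption|apply iso_id]]
    | apply iso_lunit]. }
  rewrite <- !E, H. reflexivity.
Qed.

Lemma full (Y : mob M) (HY : weakly_invertible M Y) {U V : mob M} (h : mhom (mtens Y U) (mtens Y V)) :
  exists al : mhom U V, mid Y ⊗ al = h /\ (is_iso M h -> is_iso M al).
Proof.
  destruct HY as [Y' [[e1 He1] [e2 [e2' [He2a He2b]]]]].
  pose (eta := fun W : mob M => massoc Y' Y W ∘ ((e2' ⊗ mid W) ∘ mlunit_inv W)).
  pose (etai := fun W : mob M => mlunit W ∘ ((e2 ⊗ mid W) ∘ massoc_inv Y' Y W)).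
  assert (E1 : forall W, etai W ∘ eta W = mid W).
  { intros W. unfold eta, etai. nf. canc. rewrite (tw_inv_k He2b). canc. reflexivity. }
  assert (E2 : forall W, eta W ∘ etai W = mid _).
  { intros W. unfold eta, etai. nf. canc. rewrite (tw_inv_k He2a). canc. reflexivity. }
  assert (Nat : forall W W' (x : mhom W W'), eta W' ∘ x = (mid Y' ⊗ (mid Y ⊗ x)) ∘ eta W).
  { intros W W' x. unfold eta. nf. rewrite nat_li. rewrite (cA (e2' ⊗ mid W')), <- tsl, tsr.
    rewrite <- (tid Y' Y). nf. rewrite nat_a_k. reflexivity. }
  exists (etai V ∘ ((mid Y' ⊗ h) ∘ eta U)). split.
  - apply (faithful_w Y Y' e1 He1).
    apply (iso_cancel_r (eta U)). { exists (etai U). split; auto. }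
    rewrite <- Nat. nf. rewrite (cA (eta V)), E2, idl. reflexivity.
  - intros Hh. apply iso_comp; [apply iso_comp|].
    + exists (etai U); split; auto.
    + apply iso_tensm; [apply iso_id|assumption].
    + exists (eta V); split; auto.
Qed.

End Full.

Section PM2.
Context {M : SMC}.
Local Notation "1" := (mid _).

Lemma tri_inv (X Y : mob M) : massoc X munit Y ∘ (mrunit_inv X ⊗ mid Y) = mid X ⊗ mlunit_inv Y.
Proof.
  apply (iso_cancel_l (mid X ⊗ mlunit Y)). { apply iso_tensm; [apply iso_id|apply iso_lunit]. }
  rewrite cA, triangle, tc1, rri, t1c, lli, !tid. reflexivity.
Qed.
Lemma K1inv (X Y : mob M) : massoc_inv X Y munit ∘ (mid X ⊗ mrunit_inv Y) = mrunit_inv (mtens X Y).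
Proof.
  apply (iso_cancel_l (mrunit (mtens X Y))); [apply iso_runit|].
  rewrite cA, K1', t1c, rri, tid, rri. reflexivity.
Qed.

Lemma isoP_iso {X Y : mob M} (A : wob M) (f : mhom X (mtens Y (proj1_sig A))) :
  is_iso (P_data M) (pmk M (mkr A f)) -> is_iso M f.
Proof.
  intros [S [H1 H2]]. cbn [mcomp mid P_data] in H1, H2.
  destruct (pmk_surj S) as [B [g ->]].
  rewrite pcomp_pmk, pid_pmk in H1. rewrite pcomp_pmk, pid_pmk in H2. apply pmk_inj in H1. apply pmk_inj in H2.
  destruct H1 as [al [Hal E1]]. destruct H2 as [be [Hbe E2]]. simpl in *.
  set (Phi := mrunit X ∘ ((mid X ⊗ al) ∘ massoc X (proj1_sig B) (proj1_sig A))).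
  assert (HPhi : is_iso M Phi).
  { apply iso_comp; [apply iso_comp; [apply iso_assoc|apply iso_tensm; [apply iso_id|assumption]]|apply iso_runit]. }
  destruct HPhi as [Phii [HP1 HP2]].
  assert (F1 : Phi ∘ ((g ⊗ mid _) ∘ f) = mid X).
  { unfold Phi. nf. rewrite E1, rri. reflexivity. }
  set (L' := mrunit Y ∘ ((mid Y ⊗ be) ∘ (massoc Y (proj1_sig A) (proj1_sig B) ∘ (f ⊗ mid _)))).
  assert (F2 : L' ∘ g = mid Y). { unfold L'. nf. rewrite E2, rri. reflexivity. }
  assert (G1 : (g ⊗ mid (proj1_sig A)) ∘ (f ∘ Phi) = mid _).
  { assert (G0 : (g ⊗ mid _) ∘ f = Phii).
    { transitivity (Phii ∘ (Phi ∘ ((g ⊗ mid _) ∘ f))).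
      - rewrite cA, HP1, idl. reflexivity.
      - rewrite F1, idr. reflexivity. }
    rewrite cA, G0, HP1. reflexivity. }
  assert (G2 : (L' ⊗ mid (proj1_sig A)) ∘ (g ⊗ mid _) = mid _).
  { rewrite tc1, F2, tid. reflexivity. }
  assert (G3 : f ∘ Phi = L' ⊗ mid _).
  { rewrite <- (idl (f ∘ Phi)), <- G2, <- cA, G1, idr. reflexivity. }
  assert (Hf : is_iso M (f ∘ Phi)).
  { exists (g ⊗ mid _). split; [exact G1|]. rewrite G3. exact G2. }
  replace f with ((f ∘ Phi) ∘ Phii).
  - apply iso_comp; [exists Phi; split; assumption | exact Hf].
  - rewrite <- cA, HP2, idr. reflexivity.
Qed.


Lemma iso_isoP {X Y : mob M} (A : wob M) (f : mhom X (mtens Y (proj1_sig A))) :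
  is_iso M f -> is_iso (P_data M) (pmk M (mkr A f)).
Proof.
  intros [fi [Hf1 Hf2]].
  destruct A as [A HA]. simpl in *.
  pose proof HA as HA'. destruct HA' as [As [[e1 [e1' [He1a He1b]]] [e2 He2]]].
  assert (HAs : weakly_invertible M As).
  { exists A; split; [exists e2; exact He2 | exists e1; exists e1'; split; assumption]. }
  set (g := (fi ⊗ mid As) ∘ (massoc_inv Y A As ∘ ((mid Y ⊗ e1') ∘ mrunit_inv Y))).
  exists (pmk M (mkr (exist _ As HAs) g)). cbn [mcomp mid P_data]. split.
  - rewrite pcomp_pmk, pid_pmk. apply pmk_eq.
    set (k := massoc A As A ∘ ((e1' ⊗ mid A) ∘ mlunit_inv A)).
    assert (Hkiso : is_iso M (k ∘ mrunit A)).
    { unfold k. apply iso_comp; [apply iso_runit|].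
      apply iso_comp; [apply iso_comp; [apply iso_lunit_inv|]|apply iso_assoc].
      apply iso_tensm; [exists e1; split; assumption|apply iso_id]. }
    destruct (full A HA (k ∘ mrunit A)) as [ga [Hga Hgi]].
    destruct (Hgi Hkiso) as [gai [Hg1 Hg2]].
    apply (prel_mk (wtens M (exist _ As HAs) (exist _ A HA)) (wunit M) _ _ gai).
    { exists ga; split; assumption. }
    simpl. unfold g. rewrite <- !tc1. nf. rewrite nat_a_k.
    rwk (penF Y A As A). rewrite nat_a_k. rwk (tri_inv Y A).
    assert (wk : mid Y ⊗ k = (mid Y ⊗ massoc A As A) ∘ ((mid Y ⊗ (e1' ⊗ mid A)) ∘ (mid Y ⊗ mlunit_inv A))).
    { unfold k. rewrite <- !t1c. reflexivity. }
    rwkr wk.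
    assert (Hk : k = (mid A ⊗ ga) ∘ mrunit_inv A). { rewrite Hga. nf. canc. reflexivity. }
    rewrite Hk, <- t1c. nf. rewrite nat_ai_k. rwk (K1inv Y A).
    rewrite !tid. rewrite (cA (mid X ⊗ gai)), <- tsr, (tsl fi gai). nf.
    rewrite t1c_k, Hg1, tid, idl. rewrite <- nat_ri_k, Hf1, idr. reflexivity.
  - rewrite pcomp_pmk, pid_pmk. apply pmk_eq.
    apply (prel_mk (wtens M (exist _ A HA) (exist _ As HAs)) (wunit M) _ _ e1).
    { exists e1'; split; assumption. }
    simpl. unfold g. nf. rewrite (tw_inv_k Hf2). canc. rewrite (w_inv_k He1b). reflexivity.
Qed.
End PM2.

Section PM3.
Context {M : SMC}.
Local Notation "1" := (mid _).

Lemma wi_sym_M (X Z : mob M) : isomorphic M (mtens X Z) munit -> weakly_invertible M X.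
Proof.
  intros H. exists Z. split; [exact H|].
  eapply isomorphic_trans; [|exact H]. exists (msym Z X). apply iso_sym.
Qed.

Lemma wiP_wiM (X : mob M) : weakly_invertible (P_data M) X -> weakly_invertible M X.
Proof.
  intros [X' [[S HS] _]]. change (phom M (mtens X X') munit) in S.
  destruct (pmk_surj S) as [[A HA] [f ->]]. apply isoP_iso in HS. simpl in f, HS.
  destruct HA as [As [HAs _]].
  apply (wi_sym_M X (mtens X' As)).
  eapply isomorphic_trans. { exists (massoc_inv X X' As). apply iso_assoc_inv. }
  eapply isomorphic_trans. { apply isomorphic_tens; [exists f; exact HS|apply isomorphic_refl]. }
  eapply isomorphic_trans. { apply isomorphic_tens; [exists (mlunit A); apply iso_lunit|apply isomorphic_refl]. }
  exact HAs.
Qed.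

Lemma isoP_exists (X Y : mob M) : weakly_invertible M X -> weakly_invertible M Y ->
  exists S : phom M X Y, is_iso (P_data M) S.
Proof.
  intros HX HY. pose proof HY as HY'. destruct HY' as [Ys [[eY [eYi [HY1 HY2]]] HY3]].
  assert (HYs : weakly_invertible M Ys).
  { exists Y. split; [exact HY3|exists eY; exists eYi; split; assumption]. }
  exists (pmk M (mkr (exist _ (mtens Ys X) (wi_tens M Ys X HYs HX))
     (massoc Y Ys X ∘ ((eYi ⊗ mid X) ∘ mlunit_inv X)))).
  apply iso_isoP. simpl.
  apply iso_comp; [apply iso_comp; [apply iso_lunit_inv|]|apply iso_assoc].
  apply iso_tensm; [exists eY; split; assumption|apply iso_id].
Qed.

Lemma P_pure : purely_monoidal (P_data M).
Proof.
  intros X Y HX HY. apply wiP_wiM in HX. apply wiP_wiM in HY.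
  destruct (isoP_exists X Y HX HY) as [S HS]. exists S. split; [exact HS|].
  intros T HT. change (phom M X Y) in S, T.
  destruct (pmk_surj S) as [A [f ->]]. destruct (pmk_surj T) as [A' [f' ->]].
  apply isoP_iso in HS. apply isoP_iso in HT.
  destruct HS as [fi [Hf1 Hf2]].
  destruct (full Y HY (f' ∘ fi)) as [al [Hal Hali]].
  apply pmk_eq. apply prel_sym. apply (prel_mk A A' _ _ al).
  - apply Hali. apply iso_comp; [exists f; split; assumption|exact HT].
  - rewrite Hal, <- cA, Hf1, idr. reflexivity.
Qed.

Definition PM : SMC := {| smc := P_data M; smc_ax := P_axioms |}.

Lemma pi_ssmf : is_ssmf M (P_data M) (pi_functor M).
Proof.
  constructor; cbn [fo fm fphi2 fphi0 pi_functor mcomp mid mtensm mtens munit massoc mlunit mrunit msym P_data].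
  - intros. rewrite pcomp_pi. reflexivity.
  - intros. rewrite pid_pi. reflexivity.
  - intros. rewrite !pid_pi, ptensm_pi, !pcomp_pi, idl, idr. reflexivity.
  - intros. apply (iso_id PM).
  - apply (iso_id PM).
  - intros. rewrite !pid_pi, !ptensm_pi, !pcomp_pi. repeat rewrite ?tid, ?idl, ?idr. reflexivity.
  - intros. rewrite !pid_pi, !ptensm_pi, !pcomp_pi. repeat rewrite ?tid, ?idl, ?idr. reflexivity.
  - intros. rewrite !pid_pi, !ptensm_pi, !pcomp_pi. repeat rewrite ?tid, ?idl, ?idr. reflexivity.
  - intros. rewrite !pid_pi, !pcomp_pi, idl, idr. reflexivity.
Qed.

End PM3.

Section FM.
Context {M N : SMC} (F : fdata M N) (HF : is_ssmf M N F).
Local Notation "1" := (mid _).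
Local Notation φ := (fphi2 F).

Definition phi2i (X Y : mob M) : mhom (fo F (mtens X Y)) (mtens (fo F X) (fo F Y)) :=
  proj1_sig (constructive_indefinite_description _ (f_phi2_iso _ _ _ HF X Y)).
Lemma phi2i_l (X Y : mob M) : phi2i X Y ∘ φ X Y = mid _.
Proof. unfold phi2i. destruct (constructive_indefinite_description _ _) as [g [H1 H2]]. exact H1. Qed.
Lemma phi2i_r (X Y : mob M) : φ X Y ∘ phi2i X Y = mid _.
Proof. unfold phi2i. destruct (constructive_indefinite_description _ _) as [g [H1 H2]]. exact H2. Qed.
Lemma phi2i_l_k {V : mob N} {X Y : mob M} (k : mhom V _) : phi2i X Y ∘ (φ X Y ∘ k) = k.
Proof. rewrite cA, phi2i_l, idl. reflexivity. Qed.
Lemma phi2i_r_k {V : mob N} {X Y : mob M} (k : mhom V _) : φ X Y ∘ (phi2i X Y ∘ k) = k.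
Proof. rewrite cA, phi2i_r, idl. reflexivity. Qed.

Lemma Fc {X Y Z : mob M} (g : mhom Y Z) (f : mhom X Y) : fm F (g ∘ f) = fm F g ∘ fm F f.
Proof. apply (f_comp _ _ _ HF). Qed.
Lemma Fi (X : mob M) : fm F (mid X) = mid _.
Proof. apply (f_id _ _ _ HF). Qed.
Lemma Fn2 {X X' Y Y' : mob M} (f : mhom X X') (g : mhom Y Y') :
  fm F (f ⊗ g) ∘ φ X Y = φ X' Y' ∘ (fm F f ⊗ fm F g).
Proof. apply (f_phi2_nat _ _ _ HF). Qed.
Lemma Fn2_k {V : mob N} {X X' Y Y' : mob M} (f : mhom X X') (g : mhom Y Y') (k : mhom V _) :
  fm F (f ⊗ g) ∘ (φ X Y ∘ k) = φ X' Y' ∘ ((fm F f ⊗ fm F g) ∘ k).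
Proof. rewrite !cA, Fn2. reflexivity. Qed.
Lemma Fn2i {X X' Y Y' : mob M} (f : mhom X X') (g : mhom Y Y') :
  phi2i X' Y' ∘ fm F (f ⊗ g) = (fm F f ⊗ fm F g) ∘ phi2i X Y.
Proof.
  apply (iso_cancel_r (φ X Y)). { exists (phi2i X Y); split; [apply phi2i_l|apply phi2i_r]. }
  nf. rewrite Fn2, phi2i_l_k, phi2i_l, idr. reflexivity.
Qed.
Lemma Fa (X Y Z : mob M) :
  fm F (massoc X Y Z) ∘ (φ (mtens X Y) Z ∘ (φ X Y ⊗ mid (fo F Z)))
  = φ X (mtens Y Z) ∘ ((mid (fo F X) ⊗ φ Y Z) ∘ massoc (fo F X) (fo F Y) (fo F Z)).
Proof. apply (f_assoc _ _ _ HF). Qed.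
Lemma Fb (X Y : mob M) : fm F (msym X Y) ∘ φ X Y = φ Y X ∘ msym (fo F X) (fo F Y).
Proof. apply (f_sym _ _ _ HF). Qed.

Lemma Fiso {X Y : mob M} (f : mhom X Y) : is_iso M f -> is_iso N (fm F f).
Proof.
  intros [g [H1 H2]]. exists (fm F g). rewrite <- !Fc, H1, H2, !Fi. split; reflexivity.
Qed.

Lemma Fai (X Y Z : mob M) :
  fm F (massoc_inv X Y Z) ∘ (φ X (mtens Y Z) ∘ (mid (fo F X) ⊗ φ Y Z))
  = φ (mtens X Y) Z ∘ ((φ X Y ⊗ mid (fo F Z)) ∘ massoc_inv (fo F X) (fo F Y) (fo F Z)).
Proof.
  apply (iso_cancel_l (fm F (massoc X Y Z))). { apply Fiso, iso_assoc. }
  nf. rewrite (cA (fm F (massoc X Y Z)) (fm F (massoc_inv X Y Z))), <- Fc, aai, Fi, idl.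
  rwk (Fa X Y Z). canc. reflexivity.
Qed.

Lemma F1x {W U V : mob M} (h : mhom U V) :
  fm F (mid W ⊗ h) ∘ φ W U = φ W V ∘ (mid _ ⊗ fm F h).
Proof. rewrite Fn2, Fi. reflexivity. Qed.

Lemma Fm (W X Y Z : mob M) :
  fm F (canon M W X Y Z) ∘ (φ (mtens W X) (mtens Y Z) ∘ (φ W X ⊗ φ Y Z))
  = φ (mtens W Y) (mtens X Z) ∘ ((φ W Y ⊗ φ X Z) ∘ canon N (fo F W) (fo F X) (fo F Y) (fo F Z)).
Proof.
  unfold canon at 1. rewrite !Fc. nf.
  rewrite (tsl (φ W X) (φ Y Z)). rwk (Fa W X (mtens Y Z)).
  rewrite <- (tid (fo F W) (fo F X)), nat_a.
  rwk (F1x (W:=W) (massoc_inv X Y Z)). rewrite !t1c_k. nf. rewrite Fai. rewrite <- !t1c. nf.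
  rwk (F1x (W:=W) (msym X Y ⊗ mid Z)). rewrite !t1c_k. nf. rwk (Fn2 (msym X Y) (mid Z)).
  rewrite Fi, tc1_k, Fb, <- tc1. rewrite <- !t1c. nf.
  rwk (F1x (W:=W) (massoc Y X Z)). rewrite !t1c_k. nf. rwk (Fa Y X Z). rewrite <- !t1c. nf.
  rwk (Fai W Y (mtens X Z)). rewrite nat_ai_k. rewrite tid. rwkr (tsl (φ W Y) (φ X Z)).
  unfold canon. nf. reflexivity.
Qed.

End FM.

Section U.
Context {M N : SMC} (HN : purely_monoidal N) (F : fdata M N) (HF : is_ssmf M N F).
Local Notation "1" := (mid _).
Local Notation φ := (fphi2 F).
Local Notation φi := (phi2i F HF).
Let Fc := @Fc M N F HF.
Let Fi := @Fi M N F HF.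
Let Fn2 := @Fn2 M N F HF.
Let Fn2_k := @Fn2_k M N F HF.
Let Fn2i := @Fn2i M N F HF.
Let Fa := @Fa M N F HF.
Let Fai := @Fai M N F HF.
Let Fb := @Fb M N F HF.
Let Fm := @Fm M N F HF.
Let phi2i_l := @phi2i_l M N F HF.
Let phi2i_r := @phi2i_r M N F HF.
Let phi2i_l_k := @phi2i_l_k M N F HF.
Let phi2i_r_k := @phi2i_r_k M N F HF.

Lemma uniqN {P Q : mob N} (HP : weakly_invertible N P) (HQ : weakly_invertible N Q) (g1 g2 : mhom P Q) :
  is_iso N g1 -> is_iso N g2 -> g1 = g2.
Proof.
  intros H1 H2. destruct (HN P Q HP HQ) as [f [_ Hf]]. rewrite (Hf g1 H1), (Hf g2 H2). reflexivity.
Qed.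

Definition phi0i : mhom (fo F munit) munit :=
  proj1_sig (constructive_indefinite_description _ (f_phi0_iso _ _ _ HF)).
Lemma phi0i_l : phi0i ∘ fphi0 F = mid _.
Proof. unfold phi0i. destruct (constructive_indefinite_description _ _) as [g [H1 H2]]. exact H1. Qed.
Lemma phi0i_r : fphi0 F ∘ phi0i = mid _.
Proof. unfold phi0i. destruct (constructive_indefinite_description _ _) as [g [H1 H2]]. exact H2. Qed.
Lemma phi0i_iso : is_iso N phi0i.
Proof. exists (fphi0 F). split; [apply phi0i_r|apply phi0i_l]. Qed.
Lemma phi2i_iso (X Y : mob M) : is_iso N (φi X Y).
Proof. exists (φ X Y). split; [apply phi2i_r|apply phi2i_l]. Qed.
Lemma phi2_iso (X Y : mob M) : is_iso N (φ X Y).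
Proof. exists (φi X Y). split; [apply phi2i_l|apply phi2i_r]. Qed.

Lemma FwI (A : mob M) : weakly_invertible M A -> weakly_invertible N (fo F A).
Proof.
  intros [B [[e1 He1] [e2 He2]]]. exists (fo F B). split.
  - exists (phi0i ∘ (fm F e1 ∘ φ A B)).
    apply iso_comp; [apply iso_comp; [apply phi2_iso|apply (Fiso F HF); auto]|apply phi0i_iso].
  - exists (phi0i ∘ (fm F e2 ∘ φ B A)).
    apply iso_comp; [apply iso_comp; [apply phi2_iso|apply (Fiso F HF); auto]|apply phi0i_iso].
Qed.
Lemma FwI_unit : weakly_invertible N (fo F munit).
Proof. apply FwI, wi_unit. Qed.

Definition uF (A : wob M) : mhom (fo F (proj1_sig A)) munit :=
  proj1_sig (constructive_indefinite_description _ (HN _ _ (FwI _ (proj2_sig A)) (wi_unit N))).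
Lemma uF_iso (A : wob M) : is_iso N (uF A).
Proof. unfold uF. destruct (constructive_indefinite_description _ _) as [g [H1 H2]]. exact H1. Qed.

Lemma uF_eq (A : wob M) (g : mhom (fo F (proj1_sig A)) munit) : is_iso N g -> g = uF A.
Proof. intros Hg. apply uniqN; [apply FwI, (proj2_sig A)|apply wi_unit|exact Hg|apply uF_iso]. Qed.

Definition Frep {X Y : mob M} (r : prep M X Y) : mhom (fo F X) (fo F Y) :=
  mrunit (fo F Y) ∘ ((mid _ ⊗ uF (projT1 r)) ∘ (φi Y (proj1_sig (projT1 r)) ∘ fm F (projT2 r))).

Lemma Frep_prel {X Y : mob M} (r s : prep M X Y) : prel M r s -> Frep r = Frep s.
Proof.
  destruct r as [A f], s as [A' f']. intros [al [Hal E]]. simpl in *. subst f'. unfold Frep. simpl.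
  rewrite Fc. rewrite (cA (φi Y (proj1_sig A'))), Fn2i, Fi. nf. rewrite t1c_k.
  rewrite (uF_eq A (uF A' ∘ fm F al)). { reflexivity. }
  apply iso_comp; [apply (Fiso F HF); auto|apply uF_iso].
Qed.

Lemma Frep_pi {X Y : mob M} (h : mhom X Y) : Frep (rpi h) = fm F h.
Proof.
  unfold Frep, rpi. simpl.
  rewrite <- (uF_eq (wunit M) phi0i phi0i_iso).
  assert (E : mrunit (fo F Y) ∘ (mid _ ⊗ phi0i) = fm F (mrunit Y) ∘ φ Y munit).
  { rewrite <- (f_runit _ _ _ HF Y). nf. rewrite t1c, phi0i_r, tid, idr. reflexivity. }
  rewrite cA, E. nf. rewrite phi2i_r_k, Fc. rewrite (cA (fm F (mrunit Y))), <- Fc, rri, Fi, idl.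
  reflexivity.
Qed.


Lemma Fn2i_k {V : mob N} {X X' Y Y' : mob M} (f : mhom X X') (g : mhom Y Y') (k : mhom V _) :
  φi X' Y' ∘ (fm F (f ⊗ g) ∘ k) = (fm F f ⊗ fm F g) ∘ (φi X Y ∘ k).
Proof. rewrite !cA, Fn2i. reflexivity. Qed.

Lemma Fa' (Z B A : mob M) :
  φi Z (mtens B A) ∘ fm F (massoc Z B A)
  = (mid _ ⊗ φ B A) ∘ (massoc _ _ _ ∘ ((φi Z B ⊗ mid _) ∘ φi (mtens Z B) A)).
Proof.
  apply (iso_cancel_l (φ Z (mtens B A))); [apply phi2_iso|].
  rewrite phi2i_r_k. rwkr (Fa Z B A). nf. rewrite tc1_k, phi2i_r, tid, idl, phi2i_r, idr. reflexivity.
Qed.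

Lemma Hu (B A : wob M) : uF (wtens M B A) ∘ φ (proj1_sig B) (proj1_sig A) = mlunit munit ∘ (uF B ⊗ uF A).
Proof.
  apply uniqN.
  - apply wi_tens; apply FwI; apply proj2_sig.
  - apply wi_unit.
  - apply iso_comp; [apply phi2_iso|apply uF_iso].
  - apply iso_comp; [apply iso_tensm; apply uF_iso|apply iso_lunit].
Qed.

Lemma Frep_comp {X Y Z : mob M} (B : wob M) (g : mhom Y (mtens Z (proj1_sig B)))
  (A : wob M) (f : mhom X (mtens Y (proj1_sig A))) :
  Frep (rcomp M (mkr B g) (mkr A f)) = Frep (mkr B g) ∘ Frep (mkr A f).
Proof.
  unfold Frep. simpl. rewrite !Fc. nf. rewrite (cA (φi Z _)), Fa'. nf.
  rewrite Fn2i_k, Fi. rewrite t1c_k, Hu, <- t1c. nf.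
  rewrite <- nat_a_k. rwk (triangle (fo F Z) munit).
  rewrite (tsl (mid (fo F Z) ⊗ uF B) (uF A)). nf.
  rewrite <- !whisk_comm_k. rewrite !nat_r_k. reflexivity.
Qed.

Lemma Fm' (W X Y Z : mob M) :
  fm F (canon M W X Y Z) ∘ φ (mtens W X) (mtens Y Z)
  = φ (mtens W Y) (mtens X Z) ∘ ((φ W Y ⊗ φ X Z) ∘ (canon N (fo F W) (fo F X) (fo F Y) (fo F Z)
      ∘ (φi W X ⊗ φi Y Z))).
Proof.
  apply (iso_cancel_r (φ W X ⊗ φ Y Z)); [apply iso_tensm; apply phi2_iso|].
  nf. rewrite <- tcomp, !phi2i_l, tid, idr. apply Fm.
Qed.
Lemma Fm'_k {V : mob N} (W X Y Z : mob M) (k : mhom V _) :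
  fm F (canon M W X Y Z) ∘ (φ (mtens W X) (mtens Y Z) ∘ k)
  = φ (mtens W Y) (mtens X Z) ∘ ((φ W Y ⊗ φ X Z) ∘ (canon N (fo F W) (fo F X) (fo F Y) (fo F Z)
      ∘ ((φi W X ⊗ φi Y Z) ∘ k))).
Proof. rewrite cA, Fm'. nf. reflexivity. Qed.

Lemma wt_k {V : mob N} {X X' Y Y' Y'' : mob N} (f : mhom X X') (h : mhom Y Y') (g : mhom Y' Y'') (k : mhom V _) :
  (mid X' ⊗ g) ∘ ((f ⊗ h) ∘ k) = (f ⊗ (g ∘ h)) ∘ k.
Proof. rewrite cA, wt. reflexivity. Qed.

Lemma Frep_tens {X Y X' Y' : mob M} (A : wob M) (f : mhom X (mtens Y (proj1_sig A)))
  (B : wob M) (g : mhom X' (mtens Y' (proj1_sig B))) :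
  Frep (rtens M (mkr A f) (mkr B g)) ∘ φ X X' = φ Y Y' ∘ (Frep (mkr A f) ⊗ Frep (mkr B g)).
Proof.
  unfold Frep. simpl. rewrite !tcomp. rewrite Fc. nf. rewrite Fn2. rewrite Fm'_k. rewrite phi2i_l_k.
  rewrite wt_k, Hu, (tsl (φ Y Y')), <- t1c. nf.
  rewrite nat_r_k. rewrite <- (tid (fo F Y) (fo F Y')), <- m_nat_k.
  rewrite tid. rwk (U1 (fo F Y) (fo F Y')). reflexivity.
Qed.

Definition Fp : fdata (P_data M) N :=
  @Build_fdata (P_data M) N (fo F) (fun X Y S => Frep (prep_of M S)) (fphi2 F) (fphi0 F).

Lemma Fp_pmk {X Y : mob M} (r : prep M X Y) : Frep (prep_of M (pmk M r)) = Frep r.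
Proof. symmetry. apply Frep_prel, prep_of_pmk. Qed.

Lemma Fp_ssmf : is_ssmf (P_data M) N Fp.
Proof.
  constructor; cbn [fo fm fphi2 fphi0 Fp mcomp mid mtensm mtens munit massoc mlunit mrunit msym P_data].
  - intros X Y Z g f. destruct (pmk_surj g) as [B [g' ->]], (pmk_surj f) as [A [f' ->]].
    rewrite pcomp_pmk, !Fp_pmk. apply Frep_comp.
  - intros X. rewrite pid_pi, pi_m_rpi, Fp_pmk, Frep_pi, Fi. reflexivity.
  - intros X X' Y Y' f g. destruct (pmk_surj f) as [A [f' ->]], (pmk_surj g) as [B [g' ->]].
    rewrite ptensm_pmk, !Fp_pmk. apply Frep_tens.
  - apply (f_phi2_iso _ _ _ HF).
  - apply (f_phi0_iso _ _ _ HF).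
  - intros. rewrite pi_m_rpi, Fp_pmk, Frep_pi.
    apply (f_assoc _ _ _ HF).
  - intros. rewrite pi_m_rpi, Fp_pmk, Frep_pi.
    apply (f_lunit _ _ _ HF).
  - intros. rewrite pi_m_rpi, Fp_pmk, Frep_pi.
    apply (f_runit _ _ _ HF).
  - intros. rewrite pi_m_rpi, Fp_pmk, Frep_pi. apply (f_sym _ _ _ HF).
Qed.

Lemma fdata_eta {A B : smc_data} (G : fdata A B) :
  G = @Build_fdata A B (fo G) (@fm _ _ G) (fphi2 G) (fphi0 G).
Proof. destruct G; reflexivity. Qed.
Lemma fdata_eq' {A B : smc_data} (fo0 : mob A -> mob B)
  (fm1 fm2 : forall X Y : mob A, mhom X Y -> mhom (fo0 X) (fo0 Y))
  (p1 p2 : forall X Y : mob A, mhom (mtens (fo0 X) (fo0 Y)) (fo0 (mtens X Y)))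
  (q1 q2 : mhom munit (fo0 munit)) :
  fm1 = fm2 -> p1 = p2 -> q1 = q2 ->
  @Build_fdata A B fo0 fm1 p1 q1 = @Build_fdata A B fo0 fm2 p2 q2.
Proof. intros; subst; reflexivity. Qed.

Lemma Fp_comp : fcomp Fp (pi_functor M) = F.
Proof.
  rewrite (fdata_eta F). unfold fcomp. cbn [fo fm fphi2 fphi0 Fp pi_functor].
  apply fdata_eq'.
  - apply functional_extensionality_dep; intros X. apply functional_extensionality_dep; intros Y.
    apply functional_extensionality; intros f. rewrite pi_m_rpi, Fp_pmk, Frep_pi. reflexivity.
  - apply functional_extensionality_dep; intros X. apply functional_extensionality_dep; intros Y.
    rewrite pid_pi, pi_m_rpi, Fp_pmk, Frep_pi, Fi, idl. reflexivity.
  - rewrite pid_pi, pi_m_rpi, Fp_pmk, Frep_pi, Fi, idl. reflexivity.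
Qed.
End U.

Section U2.
Context {M N : SMC} (HN : purely_monoidal N).
Local Notation "1" := (mid _).

Lemma canon_YIIA (Y A : mob M) : canon M Y munit munit A = mid _.
Proof.
  rewrite canon_tau. unfold tau. rewrite K5, tid, idl, aai, tid, idl, aia. reflexivity.
Qed.

Lemma Fp_unique (F2 : fdata (P_data M) N) (H2 : is_ssmf (P_data M) N F2)
  (HF : is_ssmf M N (fcomp F2 (pi_functor M))) :
  Fp HN (fcomp F2 (pi_functor M)) HF = F2.
Proof.
  destruct F2 as [fo2 fm2 p2 p0].
  assert (Fid : forall X, fm2 X X (pid M X) = mid _) by (intros X; apply (f_id _ _ _ H2 X)).
  unfold Fp. cbn [fo fm fphi2 fphi0 fcomp pi_functor].
  apply fdata_eq'.
  - apply functional_extensionality_dep; intros X. change (mob M) in X.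
    apply functional_extensionality_dep; intros Y. change (mob M) in Y.
    apply functional_extensionality; intros S.
    destruct (pmk_surj S) as [A [f ->]]. rewrite Fp_pmk.
    set (G := {| fo := fo2; fm := fm2; fphi2 := p2; fphi0 := p0 |}) in *.
    set (F := fcomp G (pi_functor M)) in *.
    assert (Fc2 : forall X Y Z (g : phom M Y Z) (h : phom M X Y), fm2 X Z (pcomp M g h) = fm2 Y Z g ∘ fm2 X Y h)
      by (intros; apply (f_comp _ _ _ H2)).
    assert (Ea : pmk M (mkr A f) = pcomp M (pmk M (mkr A (mid _))) (pi_m M f)).
    { rewrite pi_m_rpi, pcomp_pmk. symmetry. apply pmk_eq. eapply prel_trans; [apply L_pir|].
      rewrite idl. apply prel_refl. }
    assert (Eb : pmk M (mkr A (mid _)) = pcomp M (pi_m M (mrunit Y))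
               (ptensm M (pid M Y) (pmk M (mkr A (mlunit_inv (proj1_sig A)))))).
    { rewrite pid_pmk, ptensm_pmk, pi_m_rpi, pcomp_pmk. symmetry. apply pmk_eq.
      eapply prel_trans; [apply L_pil|].
      apply (prel_mk (wtens M (wunit M) A) A _ _ (mlunit _)); [apply iso_lunit|]. simpl.
      rewrite canon_YIIA, idl. rewrite (cA (mid Y ⊗ mlunit _)), <- tsr, <- tcomp, rri, lli, tid.
      reflexivity. }
    rewrite Ea, Eb, !Fc2. unfold Frep. cbn [projT1 projT2 mkr].
    change (fm F f) with (fm2 _ _ (pi_m M f)).
    rewrite !cA. f_equal. rewrite <- !cA.
    apply (iso_cancel_r (fphi2 F Y (proj1_sig A))); [apply (phi2_iso F HF)|].
    nf. rewrite (phi2i_l F HF), idr.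
    change (fphi2 F Y (proj1_sig A)) with (fm2 _ _ (pid M (mtens Y (proj1_sig A))) ∘ p2 Y (proj1_sig A)).
    rewrite Fid, idl.
    assert (Fn2' : forall X X' Y Y' (x : phom M X X') (y : phom M Y Y'),
      fm2 _ _ (ptensm M x y) ∘ p2 X Y = p2 X' Y' ∘ (fm2 _ _ x ⊗ fm2 _ _ y))
      by (intros; apply (f_phi2_nat _ _ _ H2)).
    rewrite Fn2', Fid.
    assert (HT : fm2 _ _ (pmk M (mkr A (mlunit_inv (proj1_sig A)))) = p0 ∘ uF HN F HF A).
    { apply (uniqN HN).
      - apply (FwI F HF), (proj2_sig A).
      - apply (FwI_unit F HF).
      - apply (Fiso (M:=@PM M) G H2). apply iso_isoP. apply iso_lunit_inv.
      - apply iso_comp; [apply uF_iso|]. apply (f_phi0_iso _ _ _ H2). }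
    rewrite HT, <- t1c. nf.
    pose proof (f_runit _ _ _ HF Y) as Hr. unfold F, G in Hr. cbn [fo fm fphi2 fphi0 fcomp pi_functor] in Hr.
    rewrite !Fid, !idl in Hr. rwk Hr. reflexivity.
  - apply functional_extensionality_dep; intros X. apply functional_extensionality_dep; intros Y.
    rewrite Fid, idl. reflexivity.
  - rewrite Fid, idl. reflexivity.
Qed.

End U2.

Section Pic1.
Context {M : SMC}.
Local Notation "1" := (mid _).

Lemma pic_eq {A B : pic_ob M} (f g : pic_hom M A B) : proj1_sig f = proj1_sig g -> f = g.
Proof. destruct f as [f Hf], g as [g Hg]. simpl. intros ->. f_equal. apply proof_irrelevance. Qed.

Lemma Pic_axioms : smc_axioms (Pic_data M).
Proof.
  constructor; intros; apply pic_eq; cbn.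
  - apply cA.
  - apply idl.
  - apply idr.
  - apply tid.
  - apply tcomp.
  - apply nat_a.
  - apply nat_l.
  - apply nat_r.
  - apply nat_b.
  - apply aia.
  - apply aai.
  - apply lil.
  - apply lli.
  - apply rir.
  - apply rri.
  - apply bb.
  - apply triangle.
  - apply pentagon.
  - apply hexagon.
Qed.

Lemma Pic_groupoid : is_groupoid (Pic_data M).
Proof.
  intros A B [f Hf]. pose proof Hf as Hf'. destruct Hf' as [g [H1 H2]].
  assert (Hg : is_iso M g) by (exists f; split; assumption).
  exists (exist _ g Hg). split; apply pic_eq; cbn; assumption.
Qed.

Lemma Pic_wi (X : pic_ob M) : weakly_invertible (Pic_data M) X.
Proof.
  destruct X as [A HA]. pose proof HA as HA'. destruct HA' as [B [[e1 He1] [e2 He2]]].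
  assert (HB : weakly_invertible M B) by (exists A; split; [exists e2 | exists e1]; assumption).
  exists (exist _ B HB). split.
  - exists (exist _ e1 He1). apply Pic_groupoid.
  - exists (exist _ e2 He2). apply Pic_groupoid.
Qed.

Lemma Pic_2group : is_sym_2group (Pic_data M).
Proof. split; [apply Pic_axioms|split; [apply Pic_groupoid|apply Pic_wi]]. Qed.

Lemma incl_ssmf : is_ssmf (Pic_data M) M (pic_incl M).
Proof.
  constructor; intros; cbn.
  - reflexivity.
  - reflexivity.
  - rewrite idl, idr. reflexivity.
  - apply iso_id.
  - apply iso_id.
  - rewrite !tid, !idl, !idr. reflexivity.
  - rewrite tid, !idr. reflexivity.
  - rewrite tid, !idr. reflexivity.
  - rewrite idl, idr. reflexivity.
Qed.

End Pic1.

Section Pic2.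
Context {M G : SMC} (HG : is_sym_2group G) (F : fdata G M) (HF : is_ssmf G M F).

Definition Fq : fdata G (Pic_data M) :=
  @Build_fdata G (Pic_data M)
    (fun X => exist _ (fo F X) (FwI F HF X (proj2 (proj2 HG) X)))
    (fun X Y f => exist _ (fm F f) (Fiso F HF f (proj1 (proj2 HG) X Y f)))
    (fun X Y => exist _ (fphi2 F X Y) (f_phi2_iso _ _ _ HF X Y))
    (exist _ (fphi0 F) (f_phi0_iso _ _ _ HF)).

Lemma Fq_ssmf : is_ssmf G (Pic_data M) Fq.
Proof.
  constructor; intros; try apply Pic_groupoid; apply pic_eq; cbn.
  - apply (f_comp _ _ _ HF).
  - apply (f_id _ _ _ HF).
  - apply (f_phi2_nat _ _ _ HF).
  - apply (f_assoc _ _ _ HF).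
  - apply (f_lunit _ _ _ HF).
  - apply (f_runit _ _ _ HF).
  - apply (f_sym _ _ _ HF).
Qed.

Lemma Fq_comp : fcomp (pic_incl M) Fq = F.
Proof.
  rewrite (fdata_eta F). unfold fcomp. cbn [fo fm fphi2 fphi0 Fq pic_incl].
  apply fdata_eq'.
  - reflexivity.
  - apply functional_extensionality_dep; intros X. apply functional_extensionality_dep; intros Y.
    apply idr.
  - apply idr.
Qed.

End Pic2.

Section Pic3.
Context {M G : SMC} (HG : is_sym_2group G).

Lemma fdata_eq_pic (a : mob G -> mob M) (w1 w2 : forall X, weakly_invertible M (a X))
  (fm1 fm2 : forall X Y : mob G, mhom X Y -> {g : mhom (a X) (a Y) | is_iso M g})
  (p1 p2 : forall X Y : mob G, {g : mhom (mtens (a X) (a Y)) (a (mtens X Y)) | is_iso M g})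
  (q1 q2 : {g : mhom munit (a munit) | is_iso M g}) :
  (forall X Y f, proj1_sig (fm1 X Y f) = proj1_sig (fm2 X Y f)) ->
  (forall X Y, proj1_sig (p1 X Y) = proj1_sig (p2 X Y)) ->
  proj1_sig q1 = proj1_sig q2 ->
  @Build_fdata G (Pic_data M) (fun X => exist _ (a X) (w1 X)) fm1 p1 q1
  = @Build_fdata G (Pic_data M) (fun X => exist _ (a X) (w2 X)) fm2 p2 q2.
Proof.
  intros E1 E2 E3.
  assert (Ew : w1 = w2) by (apply functional_extensionality_dep; intros; apply proof_irrelevance).
  subst w2.
  assert (Efm : fm1 = fm2).
  { apply functional_extensionality_dep; intros X. apply functional_extensionality_dep; intros Y.
    apply functional_extensionality; intros f. specialize (E1 X Y f).
    destruct (fm1 X Y f), (fm2 X Y f). simpl in E1. subst. f_equal. apply proof_irrelevance. }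
  assert (Ep : p1 = p2).
  { apply functional_extensionality_dep; intros X. apply functional_extensionality_dep; intros Y.
    specialize (E2 X Y). destruct (p1 X Y), (p2 X Y). simpl in E2. subst. f_equal. apply proof_irrelevance. }
  assert (Eq : q1 = q2).
  { destruct q1, q2. simpl in E3. subst. f_equal. apply proof_irrelevance. }
  subst. reflexivity.
Qed.

Lemma fun_sig_rect (Q : (mob G -> pic_ob M) -> Prop) :
  (forall a w, Q (fun X => exist _ (a X) (w X))) -> forall h, Q h.
Proof.
  intros H h. replace h with (fun X => exist _ (proj1_sig (h X)) (proj2_sig (h X))).
  - apply H.
  - apply functional_extensionality; intros X. destruct (h X); reflexivity.
Qed.

Lemma Fq_unique (F2 : fdata G (Pic_data M)) (HF : is_ssmf G M (fcomp (pic_incl M) F2)) :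
  Fq HG (fcomp (pic_incl M) F2) HF = F2.
Proof.
  destruct F2 as [fo2 fm2 p2 p0]. revert fm2 p2 p0 HF. pattern fo2. revert fo2.
  apply fun_sig_rect. intros a w fm2 p2 p0 HF. unfold Fq. cbn [fo fm fphi2 fphi0 fcomp pic_incl].
  apply fdata_eq_pic.
  - intros. reflexivity.
  - intros. apply idr.
  - apply idr.
Qed.

End Pic3.

Theorem corollary6p3 :
  (forall M : SMC,
     is_sym_2group (Pic_data M) /\
     is_ssmf (Pic_data M) M (pic_incl M) /\
     forall G : SMC, is_sym_2group G ->
       forall F : fdata G M, is_ssmf G M F ->
         exists! F' : fdata G (Pic_data M),
           is_ssmf G (Pic_data M) F' /\ fcomp (pic_incl M) F' = F)
  /\
  (forall M : SMC,
     smc_axioms (P_data M) /\ purely_monoidal (P_data M) /\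
     is_ssmf M (P_data M) (pi_functor M) /\
     forall N : SMC, purely_monoidal N ->
       forall F : fdata M N, is_ssmf M N F ->
         exists! F' : fdata (P_data M) N,
           is_ssmf (P_data M) N F' /\ fcomp F' (pi_functor M) = F).
Proof.
  split.
  - intros M. split; [apply Pic_2group|split; [apply incl_ssmf|]].
    intros G HG F HF. exists (Fq HG F HF). split.
    + split; [apply Fq_ssmf|apply Fq_comp].
    + intros F2 [H2 E]. subst F. apply Fq_unique.
  - intros M. split; [apply P_axioms|split; [apply P_pure|split; [apply pi_ssmf|]]].
    intros N HN F HF. exists (Fp HN F HF). split.
    + split; [apply Fp_ssmf|apply Fp_comp].
    + intros F2 [H2 E]. subst F. apply Fp_unique; assumption.
Qed.
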